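(* Let $\mathcal{C}$ be a category and $W$ a class of morphisms of $\mathcal{C}$ containing all identities, and regard $(N\mathcal{C}, W)$ as a marked simplicial set (the nerve $N\mathcal{C}$ marked at the $1$-simplices lying in $W$). (1) $(\mathcal{C}, W)$ satisfies proper calculus of left fractions if and only if $(N\mathcal{C}, W)$ satisfies calculus of left fractions (CLF). (2) $(\mathcal{C}, W)$ satisfies proper calculus of right fractions if and only if $(N\mathcal{C}, W)$ satisfies calculus of right fractions (CRF).
   Context: A marked simplicial set is a pair $(X,W)$ where $X$ is a simplicial set and $W \subseteq X_1$ contains all degenerate $1$-simplices; marked maps preserve marked $1$-simplices. Posets are regarded as simplicial sets via the nerve; $[n]=\{0<1<\dots<n\}$. Marked posets $\mathrm{L}^n_k$, $\mathrm{LJ}^n_k$, $\mathrm{R}^n_k$, $\mathrm{RJ}^n_k$: for $n\ge 0$, $0\le k\le n$, $\mathrm{L}^n_k$ is the nerve of the poset of subsets $A\subseteq[n]$ with $k\in A$, ordered by inclusion, where a $1$-simplex $A_0\subseteq A_1$ is marked iff $\max A_0=\max A_1$; $\mathrm{LJ}^n_k\subseteq \mathrm{L}^n_k$ is the maximal simplicial subset not containing the vertex $[n]$ (with the induced marking). $\mathrm{R}^n_k$ is the nerve of the opposite poset (same subsets, arrows $A_0\to A_1$ when $A_0\supseteq A_1$), where $A_0\supseteq A_1$ is marked iff $\min A_0=\min A_1$; $\mathrm{RJ}^n_k\subseteq\mathrm{R}^n_k$ is the maximal simplicial subset omitting the vertex $[n]$. A marking $W$ on $X$ is weakly closed under composition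 if every map $\Lambda^2_1\to X$ whose two $1$-simplices are marked extends to a $2$-simplex $\Delta^2\to X$ all of whose edges are marked. A marked quasicategory $(\mathcal{C},W)$ satisfies CLF if $W$ is weakly closed under composition and $(\mathcal{C},W)$ has the right lifting property (in marked simplicial sets) against all inclusions $\mathrm{LJ}^n_k\hookrightarrow\mathrm{L}^n_k$ with $n\ge2$, $0<k\le n$; it satisfies CRF if $W$ is weakly closed under composition and it has the right lifting property against all $\mathrm{RJ}^n_k\hookrightarrow\mathrm{R}^n_k$ with $n\ge 2$, $0\le k<n$. A marked category $(\mathcal{C},W)$ satisfies proper calculus of left fractions if: (i) $W$ is closed under composition and contains identities; (ii') every span $f\colon X\to Y$, $w\colon X\to X'$ with $w\in W$ can be completed to a commutative square $f'w=w'f$ with $f'\colon X'\to Y'$, $w'\colon Y\to Y'$, $w'\in W$, and moreover if $f\in W$ then $f'\in W$; (iii) for parallel $f,g\colon X\to Y$, if there is $w\colon X'\to X$ in $W$ with $fw=gw$ then there is $v\colon Y\to Y'$ in $W$ with $vf=vg$. It satisfies proper calculus of right fractions if $(\mathcal{C}^{\mathrm{op}},W)$ satisfies proper calculus of left fractions. *)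

(* Defs.v *)
From HB Require Import structures.
From Stdlib Require Import ProofIrrelevance FunctionalExtensionality.
From mathcomp Require Import all_boot.

Set Implicit Arguments.
Unset Strict Implicit.
Unset Printing Implicit Defensive.

Record category := Category {
  Obj : Type;
  Hom : Obj -> Obj -> Type;
  cid : forall x, Hom x x;
  ccomp : forall x y z, Hom y z -> Hom x y -> Hom x z;
  ccomp_id_l : forall x y (f : Hom x y), ccomp (cid y) f = f;
  ccomp_id_r : forall x y (f : Hom x y), ccomp f (cid x) = f;
  ccompA : forall x y z t (h : Hom z t) (g : Hom y z) (f : Hom x y),
      ccomp h (ccomp g f) = ccomp (ccomp h g) f }.

Arguments Hom {c} x y.
Arguments cid {c} x.
Arguments ccomp {c x y z} g f.

Definition op_category (C : category) : category.
Proof.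
refine (@Category (Obj C) (fun x y => @Hom C y x) (fun x => cid x)
          (fun x y z g f => ccomp f g) _ _ _).
- by move=> x y f; apply: ccomp_id_r.
- by move=> x y f; apply: ccomp_id_l.
- by move=> x y z t h g f; symmetry; apply: ccompA.
Defined.

Definition cmarking (C : category) := forall x y : Obj C, Hom x y -> Prop.

Definition op_marking (C : category) (W : cmarking C) : cmarking (op_category C) :=
  fun x y (f : @Hom C y x) => W y x f.

(* Proper calculus of left fractions: (i), (ii'), (iii). *)
Definition proper_left (C : category) (W : cmarking C) : Prop :=
  [/\ (forall (x y z : Obj C) (g : Hom y z) (f : Hom x y),
          W _ _ f -> W _ _ g -> W _ _ (ccomp g f)),
      (forall x : Obj C, W x x (cid x)),
      (forall (X Y X' : Obj C) (f : Hom X Y) (w : Hom X X'), W _ _ w ->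
          exists (Y' : Obj C) (f' : Hom X' Y') (w' : Hom Y Y'),
            [/\ W _ _ w', ccomp f' w = ccomp w' f & (W _ _ f -> W _ _ f')])
    & (forall (X Y : Obj C) (f g : Hom X Y),
          (exists (X' : Obj C) (w : Hom X' X), W _ _ w /\ ccomp f w = ccomp g w) ->
          exists (Y' : Obj C) (v : Hom Y Y'), W _ _ v /\ ccomp v f = ccomp v g)].

Definition proper_right (C : category) (W : cmarking C) : Prop :=
  proper_left (op_marking W).

Record mono (m n : nat) := Mono {
  mfun :> 'I_m.+1 -> 'I_n.+1;
  mfunP : forall i j : 'I_m.+1, i <= j -> mfun i <= mfun j }.

Definition mono_id n : mono n n := @Mono n n id (fun i j h => h).

Definition mono_comp m n p (t : mono n p) (s : mono m n) : mono m p :=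
  @Mono m p (fun i => t (s i)) (fun i j h => mfunP t (mfunP s h)).

Definition sdeg : mono 1 0 := @Mono 1 0 (fun _ => ord0) (fun _ _ _ => leqnn 0).

Record sSet := SSet {
  simp :> nat -> Type;
  sact : forall m n, mono m n -> simp n -> simp m;
  sact_id : forall n (x : simp n), sact (mono_id n) x = x;
  sact_comp : forall m n p (t : mono n p) (s : mono m n) (x : simp p),
      sact (mono_comp t s) x = sact s (sact t x) }.

Arguments sact {s0 m n} t x.

Record sMap (X Y : sSet) := SMap {
  smap :> forall n, X n -> Y n;
  smapP : forall m n (t : mono m n) (x : X n), smap (sact t x) = sact t (smap x) }.

Arguments smap {X Y} s {n} x.

Record msSet := MSSet {
  msX :> sSet;
  mark : msX 1 -> Prop;
  mark_deg : forall x : msX 0, mark (sact sdeg x) }.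

Arguments mark {m} x.

Record msMap (X Y : msSet) := MSMap {
  msmap :> sMap X Y;
  msmapP : forall x : X 1, mark x -> mark (smap msmap x) }.

Definition sub_closed (X : sSet) (P : forall n, X n -> Prop) :=
  forall m n (t : mono m n) (x : X n), P n x -> P m (sact t x).

Lemma exist_eq (A : Type) (P : A -> Prop) (a b : A) (p : P a) (q : P b) :
  a = b -> exist P a p = exist P b q.
Proof. by move=> e; subst b; f_equal; apply: proof_irrelevance. Qed.

Definition subS (X : sSet) (P : forall n, X n -> Prop) (HP : sub_closed P) : sSet.
Proof.
refine (@SSet (fun n => {x : X n | P n x})
          (fun m n t x => exist (P m) (sact t (proj1_sig x)) (HP _ _ t _ (proj2_sig x)))
          _ _).
- by move=> n [x px]; apply: exist_eq; apply: sact_id.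
- by move=> m n p t s [x px]; apply: exist_eq; apply: sact_comp.
Defined.

Definition subS_incl (X : sSet) (P : forall n, X n -> Prop) (HP : sub_closed P) :
  sMap (subS HP) X := @SMap (subS HP) X (fun n x => proj1_sig x) (fun _ _ _ _ => erefl).

Definition msub (X : msSet) (P : forall n, X n -> Prop) (HP : sub_closed P) : msSet :=
  @MSSet (subS HP) (fun x => mark (proj1_sig x)) (fun x => mark_deg (proj1_sig x)).

Definition msub_incl (X : msSet) (P : forall n, X n -> Prop) (HP : sub_closed P) :
  msMap (msub HP) X := @MSMap (msub HP) X (subS_incl HP) (fun x h => h).

Definition mono_to (P : Type) (le : P -> P -> Prop) (n : nat) :=
  {f : 'I_n.+1 -> P | forall i j : 'I_n.+1, i <= j -> le (f i) (f j)}.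

Definition pnerve (P : Type) (le : P -> P -> Prop) : sSet.
Proof.
refine (@SSet (mono_to le)
          (fun m n t x => exist (fun f : 'I_m.+1 -> P => forall i j : 'I_m.+1, i <= j -> le (f i) (f j))
                                  (fun i => proj1_sig x (t i))
                                  (fun i j h => proj2_sig x _ _ (mfunP t h))) _ _).
- by move=> n [f fP]; apply: exist_eq.
- by move=> m n p t s [f fP]; apply: exist_eq.
Defined.

Definition omitP (P : Type) (le : P -> P -> Prop) (v : P) :
  forall n, pnerve le n -> Prop :=
  fun n x => forall i, proj1_sig x i <> v.
Arguments omitP {P} le v n x.

Lemma omitP_closed (P : Type) (le : P -> P -> Prop) (v : P) : sub_closed (omitP le v).
Proof. by move=> m n t x h i; apply: h. Qed.
Arguments omitP_closed {P} le v.

Definition Lvert n (k : 'I_n.+1) := {A : {set 'I_n.+1} | k \in A}.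

Definition Ltop n (k : 'I_n.+1) : Lvert k := exist _ setT (in_setT k).

Definition Lle n (k : 'I_n.+1) (A B : Lvert k) : Prop :=
  proj1_sig A \subset proj1_sig B.
Definition Rle n (k : 'I_n.+1) (A B : Lvert k) : Prop :=
  proj1_sig B \subset proj1_sig A.

Definition setmax n (A : {set 'I_n.+1}) : nat := \max_(i in A) (i : nat).
Definition setmin n (A : {set 'I_n.+1}) : nat := \big[minn/n]_(i in A) (i : nat).

Definition L_mark n (k : 'I_n.+1) (x : pnerve (@Lle n k) 1) : Prop :=
  setmax (proj1_sig (proj1_sig x ord0)) = setmax (proj1_sig (proj1_sig x ord_max)).
Definition R_mark n (k : 'I_n.+1) (x : pnerve (@Rle n k) 1) : Prop :=
  setmin (proj1_sig (proj1_sig x ord0)) = setmin (proj1_sig (proj1_sig x ord_max)).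

Definition L_ms n (k : 'I_n.+1) : msSet :=
  @MSSet (pnerve (@Lle n k)) (@L_mark n k) (fun x => erefl).
Definition R_ms n (k : 'I_n.+1) : msSet :=
  @MSSet (pnerve (@Rle n k)) (@R_mark n k) (fun x => erefl).

Definition LJ_ms n (k : 'I_n.+1) : msSet :=
  @msub (L_ms k) (omitP (@Lle n k) (Ltop k)) (omitP_closed _ (Ltop k)).
Definition RJ_ms n (k : 'I_n.+1) : msSet :=
  @msub (R_ms k) (omitP (@Rle n k) (Ltop k)) (omitP_closed _ (Ltop k)).

Definition LJ_incl n (k : 'I_n.+1) : msMap (LJ_ms k) (L_ms k) := msub_incl _.
Definition RJ_incl n (k : 'I_n.+1) : msMap (RJ_ms k) (R_ms k) := msub_incl _.

Definition le3 (a b : 'I_3) : Prop := a <= b.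
Definition Delta2 : sSet := pnerve le3.

Definition hornP : forall n, Delta2 n -> Prop :=
  fun n x => (forall i, (proj1_sig x i : nat) != 0) \/ (forall i, (proj1_sig x i : nat) != 2).

Lemma hornP_closed : sub_closed hornP.
Proof. by move=> m n t x [h|h]; [left|right] => i; apply: h. Qed.

Definition Horn21 : sSet := subS hornP_closed.

Definition weakly_closed (X : msSet) : Prop :=
  forall h : sMap Horn21 X, (forall t : Horn21 1, mark (smap h t)) ->
  exists g : sMap Delta2 X,
    (forall n (t : Horn21 n), smap g (proj1_sig t) = smap h t) /\
    (forall t : Delta2 1, mark (smap g t)).

Definition rlp (A B : msSet) (i : msMap A B) (X : msSet) : Prop :=
  forall f : msMap A X, exists g : msMap B X,
    forall n (a : A n), smap g (smap i a) = smap f a.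

Definition CLF (X : msSet) : Prop :=
  weakly_closed X /\
  forall n (k : 'I_n.+1), 2 <= n -> 0 < k -> rlp (LJ_incl k) X.

Definition CRF (X : msSet) : Prop :=
  weakly_closed X /\
  forall n (k : 'I_n.+1), 2 <= n -> k < n -> rlp (RJ_incl k) X.

Record csimp (C : category) (n : nat) := CSimp {
  cob : 'I_n.+1 -> Obj C;
  car : forall i j : 'I_n.+1, i <= j -> Hom (cob i) (cob j);
  car_id : forall (i : 'I_n.+1) (h : i <= i), car h = cid (cob i);
  car_comp : forall i j l : 'I_n.+1, forall (hij : i <= j) (hjl : j <= l) (hil : i <= l),
      car hil = ccomp (car hjl) (car hij) }.

Arguments car {C n} c {i j} h.

Definition csact (C : category) m n (t : mono m n) (x : csimp C n) : csimp C m :=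
  @CSimp C m (fun i => cob x (t i)) (fun i j h => car x (mfunP t h))
    (fun i h => car_id x _) (fun i j l a b c => car_comp x _ _ _).

Lemma csimp_eq (C : category) n (o : 'I_n.+1 -> Obj C)
  (a b : forall i j : 'I_n.+1, i <= j -> Hom (o i) (o j)) pa qa pb qb :
  (forall i j h, a i j h = b i j h) -> @CSimp C n o a pa qa = @CSimp C n o b pb qb.
Proof.
move=> e.
have eab : a = b.
  apply: functional_extensionality_dep => i.
  apply: functional_extensionality_dep => j.
  apply: functional_extensionality_dep => h.
  exact: e.
subst b; f_equal; apply: proof_irrelevance.
Qed.

Definition cnerve (C : category) : sSet.
Proof.
refine (@SSet (csimp C) (@csact C) _ _).
- by move=> n [o a p q]; apply: csimp_eq.
- by move=> m n p t s [o a pa qa]; apply: csimp_eq.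
Defined.

Definition cmark (C : category) (W : cmarking C) (x : cnerve C 1) : Prop :=
  W _ _ (car x (i := ord0) (j := ord_max) isT).

Lemma cmark_deg (C : category) (W : cmarking C) (HW : forall x : Obj C, W x x (cid x))
  (x : cnerve C 0) : cmark W (sact sdeg x).
Proof. by rewrite /cmark /= car_id; apply: HW. Qed.

Definition marked_nerve (C : category) (W : cmarking C)
  (HW : forall x : Obj C, W x x (cid x)) : msSet :=
  @MSSet (cnerve C) (cmark W) (cmark_deg HW).

(* Main.v *)
Require Import Defs.
From mathcomp Require Import all_boot.
From Stdlib Require Import ProofIrrelevance FunctionalExtensionality Classical.

Set Implicit Arguments.
Unset Strict Implicit.
Unset Printing Implicit Defensive.


Section ArrSec.
Variable C : category.

Definition Arr := {a : Obj C & {b : Obj C & @Hom C a b}}.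
Definition mkArr (a b : Obj C) (g : Hom a b) : Arr := existT _ a (existT _ b g).
Definition src (u : Arr) : Obj C := projT1 u.
Definition tgt (u : Arr) : Obj C := projT1 (projT2 u).
Definition hom (u : Arr) : Hom (src u) (tgt u) := projT2 (projT2 u).

Definition castH (a a' b b' : Obj C) (e1 : a = a') (e2 : b = b') (g : Hom a b) : Hom a' b'.
Proof. destruct e1, e2; exact g. Defined.

Lemma mkArr_castH a a' b b' (e1 : a = a') (e2 : b = b') (g : Hom a b) :
  mkArr (castH e1 e2 g) = mkArr g.
Proof. by destruct e1, e2. Qed.

Lemma castH_refl a b (e1 : a = a) (e2 : b = b) (g : Hom a b) : castH e1 e2 g = g.
Proof. by rewrite (proof_irrelevance _ e1 erefl) (proof_irrelevance _ e2 erefl). Qed.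

Lemma castH_pi a a' b b' (e1 e1' : a = a') (e2 e2' : b = b') (g : Hom a b) :
  castH e1 e2 g = castH e1' e2' g.
Proof. by rewrite (proof_irrelevance _ e1 e1') (proof_irrelevance _ e2 e2'). Qed.

Lemma mkArr_hom (u : Arr) : mkArr (hom u) = u.
Proof. by case: u => a [b g]. Qed.

Lemma mkArr_src a b a' b' (g : Hom a b) (g' : Hom a' b') : mkArr g = mkArr g' -> a = a'.
Proof. by move/(f_equal src). Qed.

Lemma mkArr_tgt a b a' b' (g : Hom a b) (g' : Hom a' b') : mkArr g = mkArr g' -> b = b'.
Proof. by move/(f_equal tgt). Qed.

Lemma mkArr_inj a b (g g' : Hom a b) : mkArr g = mkArr g' -> g = g'.
Proof. move=> E; exact: (inj_pair2 _ _ _ _ _ (inj_pair2 _ _ _ _ _ E)). Qed.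

Lemma castH_hom (u : Arr) a b (g : Hom a b) (es : src u = a) (et : tgt u = b) :
  u = mkArr g -> castH es et (hom u) = g.
Proof. move=> E; subst u; exact: castH_refl. Qed.

Definition WA (W : cmarking C) (u : Arr) : Prop := W _ _ (hom u).

Lemma WA_castH (W : cmarking C) (u : Arr) a b (es : src u = a) (et : tgt u = b) :
  WA W u -> W _ _ (castH es et (hom u)).
Proof. by destruct es, et. Qed.

Lemma WA_mk (W : cmarking C) a b (g : Hom a b) : WA W (mkArr g) = W _ _ g.
Proof. by []. Qed.

Definition Acomp (u v w : Arr) : Prop :=
  exists a b c (g : Hom a b) (h : Hom b c),
    [/\ u = mkArr g, v = mkArr h & w = mkArr (ccomp h g)].

Lemma Acomp_mk a b c (g : Hom a b) (h : Hom b c) :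
  Acomp (mkArr g) (mkArr h) (mkArr (ccomp h g)).
Proof. by exists a, b, c, g, h. Qed.

Lemma Acomp_idl a b (g : Hom a b) : Acomp (mkArr (cid a)) (mkArr g) (mkArr g).
Proof. by have := Acomp_mk (cid a) g; rewrite ccomp_id_r. Qed.

Lemma Acomp_idr a b (g : Hom a b) : Acomp (mkArr g) (mkArr (cid b)) (mkArr g).
Proof. by have := Acomp_mk g (cid b); rewrite ccomp_id_l. Qed.

Lemma Acomp_inv a b (g : Hom a b) v w : Acomp (mkArr g) v w ->
  exists c (h : Hom b c), v = mkArr h /\ w = mkArr (ccomp h g).
Proof.
case=> a' [b' [c [g' [h [e1 e2 e3]]]]].
have ea := mkArr_src e1; have eb := mkArr_tgt e1; subst a' b'.
have eg := mkArr_inj e1; subst g'.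
by exists c, h.
Qed.

Lemma Acomp_fun a b c (g : Hom a b) (h : Hom b c) w :
  Acomp (mkArr g) (mkArr h) w -> w = mkArr (ccomp h g).
Proof.
case/Acomp_inv=> c' [h' [e1 e2]].
have ec := mkArr_tgt e1; subst c'.
by have eh := mkArr_inj e1; subst h'.
Qed.

Lemma castH_acomp (u v w : Arr) (a b c : Obj C) (e1 : src u = a) (e2 : tgt u = b)
  (e3 : src v = b) (e4 : tgt v = c) (e5 : src w = a) (e6 : tgt w = c) :
  Acomp u v w -> castH e5 e6 (hom w) = ccomp (castH e3 e4 (hom v)) (castH e1 e2 (hom u)).
Proof.
case=> a0 [b0 [c0 [g [h [eu ev ew]]]]]; subst u v w.
move: e1 e2 e3 e4 e5 e6 => /= e1 e2 e3 e4 e5 e6.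
subst a b c.
by rewrite !castH_refl.
Qed.

Definition arr n (x : csimp C n) (i j : 'I_n.+1) (h : i <= j) : Arr := mkArr (car x h).

Lemma arr_pi n (x : csimp C n) (i j : 'I_n.+1) (h h' : i <= j) : arr x h = arr x h'.
Proof. by rewrite (bool_irrelevance h h'). Qed.

Lemma arr_id n (x : csimp C n) (i : 'I_n.+1) (h : i <= i) : arr x h = mkArr (cid (cob x i)).
Proof. by rewrite /arr car_id. Qed.

Lemma arr_comp n (x : csimp C n) (i j l : 'I_n.+1) (h1 : i <= j) (h2 : j <= l) (h3 : i <= l) :
  Acomp (arr x h1) (arr x h2) (arr x h3).
Proof. rewrite /arr (car_comp x h1 h2 h3); exact: Acomp_mk. Qed.

Lemma csimp_ext n (x y : csimp C n) :
  (forall (i j : 'I_n.+1) (h : i <= j), arr x h = arr y h) -> x = y.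
Proof.
case: x => o1 a1 p1 q1; case: y => o2 a2 p2 q2 /= E.
have eo : o1 = o2.
  apply: functional_extensionality => i.
  by have := E i i (leqnn i); move/(f_equal src).
subst o2; apply: csimp_eq => i j h.
by have := E i j h; rewrite /arr /= => /mkArr_inj.
Qed.

Lemma arr_smap (X : sSet) (f : sMap X (cnerve C)) m n (t : mono m n) (x : X n)
   (i j : 'I_m.+1) (h : i <= j) (h' : t i <= t j) :
  arr (smap f (sact t x)) h = arr (smap f x) h'.
Proof. rewrite (smapP f); transitivity (arr (smap f x) (mfunP t h)); [reflexivity | exact: arr_pi]. Qed.

Lemma cob_smap (X : sSet) (f : sMap X (cnerve C)) m n (t : mono m n) (x : X n) (i : 'I_m.+1) :
  cob (smap f (sact t x)) i = cob (smap f x) (t i).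
Proof. by rewrite (smapP f). Qed.

End ArrSec.


Definition dif (b : bool) (A : Type) (t : b = true -> A) (d : A) : A :=
  (if b as c return b = c -> A then fun e => t e else fun _ => d) (erefl b).

Lemma difT (b : bool) A (t : b = true -> A) d (h : b = true) : dif t d = t h.
Proof. by subst b. Qed.

Lemma difF (b : bool) A (t : b = true -> A) d : b = false -> dif t d = d.
Proof. by move=> h; subst b. Qed.

Definition dif2 (b : bool) (A : Type) (t : b = true -> A) (d : b = false -> A) : A :=
  (if b as c return b = c -> A then fun e => t e else fun e => d e) (erefl b).

Lemma dif2T (b : bool) A (t : b = true -> A) d (h : b = true) : dif2 t d = t h.
Proof. by subst b. Qed.

Lemma dif2F (b : bool) A (t : b = true -> A) d (h : b = false) : dif2 t d = d h.
Proof. by subst b. Qed.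

Section FNerve.
Variables (C : category) (P : Type) (le : P -> P -> Prop) (ok : P -> Prop).
Variables (Ob : P -> Obj C) (E : P -> P -> Arr C).
Hypothesis Esrc : forall a b, ok a -> ok b -> le a b -> src (E a b) = Ob a.
Hypothesis Etgt : forall a b, ok a -> ok b -> le a b -> tgt (E a b) = Ob b.
Hypothesis Eid : forall a, ok a -> le a a -> E a a = mkArr (cid (Ob a)).
Hypothesis Ecomp : forall a b c, ok a -> ok b -> ok c -> le a b -> le b c ->
  Acomp (E a b) (E b c) (E a c).

Definition fsimp m (x : pnerve le m) (hx : forall i, ok (proj1_sig x i)) : csimp C m.
Proof.
refine (@CSimp C m (fun i => Ob (proj1_sig x i))
  (fun i j h => castH (Esrc (hx i) (hx j) (proj2_sig x i j h))
                      (Etgt (hx i) (hx j) (proj2_sig x i j h))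
                      (hom (E (proj1_sig x i) (proj1_sig x j)))) _ _).
- move=> i h; apply: castH_hom; apply: Eid; [exact: hx | exact: (proj2_sig x i i h)].
- move=> i j l hij hjl hil; apply: castH_acomp; apply: Ecomp; try exact: hx.
  + exact: (proj2_sig x i j hij).
  + exact: (proj2_sig x j l hjl).
Defined.
Arguments fsimp [m] x hx.

Lemma arr_fsimp m (x : pnerve le m) hx (i j : 'I_m.+1) (h : i <= j) :
  arr (fsimp x hx) h = E (proj1_sig x i) (proj1_sig x j).
Proof. by rewrite /arr /= mkArr_castH mkArr_hom. Qed.

Lemma fsimp_sact m n (t : mono m n) (x : pnerve le n) hx hx' :
  fsimp (sact t x) hx' = csact t (fsimp x hx).
Proof.
apply: csimp_ext => i j h.
rewrite arr_fsimp.
transitivity (arr (fsimp x hx) (mfunP t h)); last by [].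
by rewrite arr_fsimp.
Qed.

Definition fmapF (hok : forall a, ok a) : sMap (pnerve le) (cnerve C).
Proof.
refine (@SMap (pnerve le) (cnerve C) (fun n x => fsimp x (fun i => hok _)) _).
move=> m n t x; exact: fsimp_sact.
Defined.

Lemma arr_fmapF hok m (x : pnerve le m) (i j : 'I_m.+1) (h : i <= j) :
  arr (smap (fmapF hok) x) h = E (proj1_sig x i) (proj1_sig x j).
Proof. exact: arr_fsimp. Qed.

Definition fmapS (v : P) (hok : forall a, a <> v -> ok a) :
  sMap (subS (omitP_closed le v)) (cnerve C).
Proof.
refine (@SMap (subS (omitP_closed le v)) (cnerve C)
   (fun n x => fsimp (proj1_sig x) (fun i => hok _ (proj2_sig x i))) _).
move=> m n t x; exact: fsimp_sact.
Defined.

Lemma arr_fmapS v hok m (x : subS (omitP_closed le v) m) (i j : 'I_m.+1) (h : i <= j) :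
  arr (smap (fmapS hok) x) h = E (proj1_sig (proj1_sig x) i) (proj1_sig (proj1_sig x) j).
Proof. exact: arr_fsimp. Qed.

End FNerve.
Arguments fsimp {C P le ok Ob E} Esrc Etgt Eid Ecomp [m] x hx.
Check fmapF. Check fmapS. Check arr_fmapS.


Section Cocone.
Variables (C : category) (W : cmarking C).
Arguments W : clear implicits.
Hypothesis HPL : proper_left W.

Lemma Wcomp x y z (g : Hom y z) (f : Hom x y) : W _ _ f -> W _ _ g -> W _ _ (ccomp g f).
Proof. by case: HPL => h _ _ _; apply: h. Qed.

Lemma Wid x : W x x (cid x).
Proof. by case: HPL. Qed.

Lemma Wore (X Y X' : Obj C) (f : Hom X Y) (w : Hom X X') : W _ _ w ->
  exists (Y' : Obj C) (f' : Hom X' Y') (w' : Hom Y Y'),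
    [/\ W _ _ w', ccomp f' w = ccomp w' f & (W _ _ f -> W _ _ f')].
Proof. by case: HPL => _ _ h _; apply: h. Qed.

Lemma Weq (X Y X' : Obj C) (f g : Hom X Y) (w : Hom X' X) :
  W _ _ w -> ccomp f w = ccomp g w ->
  exists (Y' : Obj C) (v : Hom Y Y'), W _ _ v /\ ccomp v f = ccomp v g.
Proof. by case: HPL => _ _ _ h wW e; apply: h; exists X', w. Qed.

Lemma equalize_seq (I : eqType) (D : I -> Obj C) (l : seq I) : forall Y (p q : forall i, Hom (D i) Y),
  (forall i, i \in l -> exists X' (w : Hom X' (D i)), W _ _ w /\ ccomp (p i) w = ccomp (q i) w) ->
  exists Y' (v : Hom Y Y'), W _ _ v /\ forall i, i \in l -> ccomp v (p i) = ccomp v (q i).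
Proof.
elim: l => [|i l IH] Y p q H.
  by exists Y, (cid Y); split => //; apply: Wid.
have [X' [w [wW e]]] := H i (mem_head _ _).
have [Y1 [v1 [v1W e1]]] := Weq wW e.
have [|Y2 [v2 [v2W e2]]] := IH Y1 (fun j => ccomp v1 (p j)) (fun j => ccomp v1 (q j)).
  move=> j jl; have [X'' [w' [w'W e']]] := H j (mem_behead (s := i :: l) jl).
  by exists X'', w'; split => //; rewrite -!ccompA e'.
exists Y2, (ccomp v2 v1); split; first exact: Wcomp.
move=> j; rewrite in_cons => /orP [/eqP -> | jl].
  by rewrite -!ccompA e1.
by rewrite -!ccompA e2.
Qed.

Lemma equalize (I : finType) (D : I -> Obj C) Y (p q : forall i, Hom (D i) Y) :
  (forall i, exists X' (w : Hom X' (D i)), W _ _ w /\ ccomp (p i) w = ccomp (q i) w) ->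
  exists Y' (v : Hom Y Y'), W _ _ v /\ forall i, ccomp v (p i) = ccomp v (q i).
Proof.
move=> H; have [Y' [v [vW e]]] := @equalize_seq I D (enum I) Y p q (fun i _ => H i).
by exists Y', v; split => // i; apply: e; rewrite mem_enum.
Qed.

Variables (T : finType) (R : rel T) (Ob : T -> Obj C).
Variable Far : forall a b, R a b -> Hom (Ob a) (Ob b).
Hypothesis RL : forall a b, R a b -> R a a.
Hypothesis RR : forall a b, R a b -> R b b.
Hypothesis Rtr : forall a b c, R a b -> R b c -> R a c.
Hypothesis Far_id : forall a (h : R a a), Far h = cid (Ob a).
Hypothesis Far_comp : forall a b c (h1 : R a b) (h2 : R b c) (h3 : R a c),
  Far h3 = ccomp (Far h2) (Far h1).
Variable sz : T -> nat.
Hypothesis sz_lt : forall a b, R a b -> a != b -> sz a < sz b.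
Variable bb : T.
Hypothesis Rbb : R bb bb.
Variable r : T -> T.
Hypothesis r_le : forall a, R a a -> R (r a) a.
Hypothesis r_bb : forall a, R a a -> R (r a) bb.
Hypothesis r_mono : forall a b, R a b -> R (r a) (r b).
Hypothesis r_W : forall a (h : R (r a) a), W _ _ (Far h).
Variable G : pred T.
Hypothesis G_r : forall a, R a a -> G a -> G (r a).
Hypothesis G_bb : forall c (h : R c bb), G c -> W _ _ (Far h).

Lemma Far_pi a b (h h' : R a b) : Far h = Far h'.
Proof. by rewrite (bool_irrelevance h h'). Qed.

Definition Inv (S : {set T}) := exists Y (lam : forall a, a \in S -> Hom (Ob a) Y),
  (forall a b (h : R a b) pa pb, ccomp (lam b pb) (Far h) = lam a pa) /\
  (forall a pa, R a a -> G a -> W _ _ (lam a pa)).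

Definition S0 : {set T} := [set a | R a bb].

Definition goodS (S : {set T}) :=
  [/\ S0 \subset S, (forall a b, b \in S -> R a b -> a \in S) & (forall a, a \in S -> R a a)].

Lemma S0P a : a \in S0 -> R a bb.
Proof. by rewrite inE. Qed.

Lemma Inv0 : Inv S0.
Proof.
exists (Ob bb), (fun a pa => Far (S0P pa)); split.
  by move=> a b h pa pb; rewrite -(Far_comp h (S0P pb) (S0P pa)).
by move=> a pa _ Ga; apply: G_bb.
Qed.

Lemma good0 : goodS S0.
Proof.
split => //.
  by move=> a b; rewrite !inE => hb hab; apply: Rtr hab hb.
by move=> a; rewrite inE => /RL.
Qed.

Lemma inS_of (S : {set T}) z a (pa : a \in z |: S) : (a == z) = false -> a \in S.
Proof. by move: pa; rewrite in_setU1 => /orP [/eqP -> | //]; rewrite eqxx. Qed.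

Lemma step (S : {set T}) z : goodS S -> Inv S -> z \notin S -> R z z ->
  (forall y, R y y -> y \notin S -> sz z <= sz y) ->
  goodS (z |: S) /\ Inv (z |: S).
Proof.
case=> S0S Sdown SR [Y [lam [lamN lamW]]] zS Rzz zmin.
have rS : forall a, R a a -> r a \in S.
  by move=> a Raa; apply: (subsetP S0S); rewrite inE; apply: r_bb.
have ltS : forall a, R a z -> a != z -> a \in S.
  move=> a Raz anz; apply/negPn/negP => aS.
  have := zmin a (RL Raz) aS; have := sz_lt Raz anz.
  by rewrite ltnNge => /negP.
have good' : goodS (z |: S).
  split.
  - by apply: subset_trans S0S _; apply/subsetP => a aS; rewrite in_setU1 aS orbT.
  - move=> a b; rewrite !in_setU1 => /orP [/eqP -> | bS] Rab.
      by case: (eqVneq a z) => [//|anz]; rewrite (ltS a Rab anz) orbT.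
    by rewrite (Sdown a b bS Rab) orbT.
  - by move=> a; rewrite in_setU1 => /orP [/eqP -> // | /SR].
split => //.
have Rrz := r_le Rzz.
have [Y2 [mu2 [v2 [v2W e2 pW]]]] := Wore (lam (r z) (rS z Rzz)) (r_W Rrz).
pose I := {a : T | (a \in S) && R a z}.
have IS (i : I) : val i \in S by case/andP: (valP i).
have IR (i : I) : R (val i) z by case/andP: (valP i).
pose p := fun i : I => ccomp mu2 (Far (IR i)).
pose q := fun i : I => ccomp v2 (lam (val i) (IS i)).
have [|Y3 [V [VW eV]]] := @equalize I (fun i => Ob (val i)) Y2 p q.
  move=> i; set a := val i.
  have Raa : R a a := RL (IR i).
  exists (Ob (r a)), (Far (r_le Raa)); split; first exact: r_W.
  have E1 : ccomp (p i) (Far (r_le Raa)) = ccomp v2 (lam (r a) (rS _ Raa)).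
    rewrite /p -ccompA -(Far_comp _ _ (Rtr (r_le Raa) (IR i))).
    rewrite (Far_comp (r_mono (IR i)) Rrz) ccompA e2 -ccompA.
    by rewrite (lamN _ _ _ (rS _ Raa)).
  have E2 : ccomp (q i) (Far (r_le Raa)) = ccomp v2 (lam (r a) (rS _ Raa)).
    by rewrite /q -ccompA (lamN _ _ _ (rS _ Raa)).
  by rewrite E1 E2.
pose v := ccomp V v2.
pose mu := ccomp V mu2.
pose lam' := fun a (pa : a \in z |: S) =>
  dif2 (fun e : (a == z) = true => castH (f_equal Ob (esym (eqP e))) erefl mu)
       (fun ne => ccomp v (lam a (inS_of pa ne))).
have lamz : forall pa, lam' z pa = mu.
  by move=> pa; rewrite /lam' (dif2T _ _ (eqxx z)) castH_refl.
have lamS : forall a pa (pa' : a \in S), a != z -> lam' a pa = ccomp v (lam a pa').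
  move=> a pa pa' anz; rewrite /lam' (dif2F _ _ (negbTE anz)).
  by rewrite (bool_irrelevance (inS_of pa (negbTE anz)) pa').
exists Y3, lam'; split.
  move=> a b h pa pb.
  case: (eqVneq b z) => [ebz | bnz].
    subst b; rewrite lamz.
    case: (eqVneq a z) => [eaz | anz].
      subst a; by rewrite lamz Far_id ccomp_id_r.
    have aS : a \in S := ltS a h anz.
    rewrite (lamS _ _ aS anz).
    pose i0 : I := exist _ a (introT andP (conj aS h)).
    have := eV i0; rewrite /p /q.
    have -> : Far (IR i0) = Far h by apply: Far_pi.
    have -> : lam (val i0) (IS i0) = lam a aS by rewrite /= (bool_irrelevance (IS i0) aS).
    by rewrite /mu /v -!ccompA => ->.
  have bS : b \in S := inS_of pb (negbTE bnz).
  have aS : a \in S := Sdown a b bS h.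
  have anz : a != z by apply: contraTneq aS => ->.
  by rewrite (lamS _ _ bS bnz) (lamS _ _ aS anz) -ccompA lamN.
move=> a pa Raa Ga.
case: (eqVneq a z) => [eaz | anz].
  subst a; rewrite lamz; apply: Wcomp => //; apply: pW; apply: lamW.
    by apply: RL (r_bb Rzz).
  exact: G_r.
have aS : a \in S := inS_of pa (negbTE anz).
rewrite (lamS _ _ aS anz); apply: Wcomp; last exact: Wcomp.
exact: lamW.
Qed.

Lemma grow m : forall S : {set T}, #|T| - #|S| <= m -> goodS S -> Inv S ->
  exists S' : {set T}, (forall a, R a a -> a \in S') /\ Inv S'.
Proof.
elim: m => [|m IH] S hm gS iS.
  exists S; split => // a _.
  have eS : S = setT.
    by apply/eqP; rewrite eqEcard subsetT cardsT -subn_eq0 -leqn0.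
  by rewrite eS inE.
case: (boolP [exists a, R a a && (a \notin S)]) => [/existsP [a0 Ha0] | hall]; last first.
  exists S; split => // a Raa; apply/negPn/negP => aS.
  by move/existsP: hall; apply; exists a; rewrite Raa aS.
have [z /andP [Rzz zS] zmin] := @arg_minnP T a0 (fun a => R a a && (a \notin S)) sz Ha0.
have [g' i'] := step gS iS zS Rzz (fun y Ryy yS => zmin y (introT andP (conj Ryy yS))).
apply: (IH _ _ g' i').
rewrite cardsU1 zS /= add1n subnS.
by move: hm; case: (#|T| - #|S|).
Qed.

Theorem cocone_exists : exists Y (lam : forall a, R a a -> Hom (Ob a) Y),
  (forall a b (h : R a b) pa pb, ccomp (lam b pb) (Far h) = lam a pa) /\
  (forall a pa, G a -> W _ _ (lam a pa)).
Proof.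
have [S [HS [Y [lam [lamN lamW]]]]] := @grow #|T| S0 (leq_subr _ _) good0 Inv0.
exists Y, (fun a pa => lam a (HS a pa)); split.
  by move=> a b h pa pb; apply: lamN.
by move=> a pa Ga; apply: lamW.
Qed.

End Cocone.


Definition mono_ed m (i j : 'I_m.+1) (h : i <= j) : mono 1 m.
Proof.
refine (@Mono 1 m (fun u : 'I_2 => match val u with 0 => i | _ => j end) _).
by move=> [[|[|u]] hu] [[|[|w]] hw] //=.
Defined.

Definition mono_pt m (i : 'I_m.+1) : mono 0 m := @Mono 0 m (fun _ => i) (fun _ _ _ => leqnn _).

Section PSimp.
Variables (P : Type) (lb : rel P) (lrefl : forall a, lb a a).
Notation le := (fun a b : P => is_true (lb a b)).

Definition pvtx (a : P) : pnerve le 0 :=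
  @exist _ (fun f : 'I_1 -> P => forall i j : 'I_1, i <= j -> lb (f i) (f j)) (fun _ => a) (fun i j _ => lrefl a).

Lemma pedge_mono a b (h : lb a b) : forall i j : 'I_2, i <= j ->
  lb (match val i with 0 => a | _ => b end) (match val j with 0 => a | _ => b end).
Proof. by move=> [[|[|u]] hu] [[|[|w]] hw] //=. Qed.

Definition pedge a b (h : lb a b) : pnerve le 1 :=
  @exist _ (fun f : 'I_2 -> P => forall i j : 'I_2, i <= j -> lb (f i) (f j)) (fun i : 'I_2 => match val i with 0 => a | _ => b end) (pedge_mono h).

Lemma ptri_mono a b c (h1 : lb a b) (h2 : lb b c) (h3 : lb a c) : forall i j : 'I_3, i <= j ->
  lb (match val i with 0 => a | 1 => b | _ => c end) (match val j with 0 => a | 1 => b | _ => c end).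
Proof. by move=> [[|[|[|u]]] hu] [[|[|[|w]]] hw] //=. Qed.

Definition ptri a b c (h1 : lb a b) (h2 : lb b c) (h3 : lb a c) : pnerve le 2 :=
  @exist _ (fun f : 'I_3 -> P => forall i j : 'I_3, i <= j -> lb (f i) (f j)) (fun i : 'I_3 => match val i with 0 => a | 1 => b | _ => c end) (ptri_mono h1 h2 h3).

Lemma psact_ed m (x : pnerve le m) (i j : 'I_m.+1) (h : i <= j) (h' : lb (proj1_sig x i) (proj1_sig x j)) :
  sact (mono_ed h) x = pedge h'.
Proof.
apply: exist_eq; apply: functional_extensionality => -[[|[|u]] hu] //=.
Qed.

Lemma psact_pt m (x : pnerve le m) (i : 'I_m.+1) :
  sact (mono_pt i) x = pvtx (proj1_sig x i).
Proof. by apply: exist_eq; apply: functional_extensionality. Qed.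

Variable C : category.

Lemma arr_pnerve (g : sMap (pnerve le) (cnerve C)) m (x : pnerve le m) (i j : 'I_m.+1) (h : i <= j)
  (h' : lb (proj1_sig x i) (proj1_sig x j)) :
  arr (smap g x) h = arr (smap g (pedge h')) (isT : (ord0 : 'I_2) <= ord_max).
Proof.
rewrite -(psact_ed h h').
by symmetry; apply: arr_smap.
Qed.

Lemma cob_pnerve (g : sMap (pnerve le) (cnerve C)) m (x : pnerve le m) (i : 'I_m.+1) :
  cob (smap g x) i = cob (smap g (pvtx (proj1_sig x i))) ord0.
Proof. by rewrite -psact_pt cob_smap. Qed.

End PSimp.


Section Extract.
Variables (C : category) (P : eqType) (lb : rel P) (lrefl : forall a, lb a a).
Variables (v d : P) (dv : d != v).
Notation le := (fun a b : P => is_true (lb a b)).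
Notation X := (subS (omitP_closed le v)).
Variable f : sMap X (cnerve C).

Lemma svtx_ok a (ha : a != v) : omitP le v 0 (pvtx lrefl a).
Proof. by move=> i; apply/eqP. Qed.

Definition svtx a (ha : a != v) : X 0 := exist _ (pvtx lrefl a) (svtx_ok ha).

Lemma sedge_ok a b (h : lb a b) (ha : a != v) (hb : b != v) : omitP le v 1 (pedge lrefl h).
Proof. by move=> [[|[|u]] hu] /=; apply/eqP. Qed.

Definition sedge a b (h : lb a b) (ha : a != v) (hb : b != v) : X 1 :=
  exist _ (pedge lrefl h) (sedge_ok (h:=h) ha hb).

Lemma stri_ok a b c (h1 : lb a b) (h2 : lb b c) (h3 : lb a c) (ha : a != v) (hb : b != v)
  (hc : c != v) : omitP le v 2 (ptri lrefl h1 h2 h3).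
Proof. by move=> [[|[|[|u]]] hu] /=; apply/eqP. Qed.

Definition stri a b c (h1 : lb a b) (h2 : lb b c) (h3 : lb a c) (ha : a != v) (hb : b != v)
  (hc : c != v) : X 2 := exist _ (ptri lrefl h1 h2 h3) (stri_ok (h1:=h1) (h2:=h2) (h3:=h3) ha hb hc).

Lemma ssact_ed m (x : X m) (i j : 'I_m.+1) (h : i <= j)
  (h' : lb (proj1_sig (proj1_sig x) i) (proj1_sig (proj1_sig x) j)) ha hb :
  sact (mono_ed h) x = sedge h' ha hb.
Proof. by apply: exist_eq; apply: psact_ed. Qed.

Lemma ssact_pt m (x : X m) (i : 'I_m.+1) ha :
  sact (mono_pt i) x = svtx (a := proj1_sig (proj1_sig x) i) ha.
Proof. by apply: exist_eq; apply: psact_pt. Qed.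

Lemma sok m (x : X m) i : proj1_sig (proj1_sig x) i != v.
Proof. by apply/eqP; apply: (proj2_sig x). Qed.

Lemma arr_sub m (x : X m) (i j : 'I_m.+1) (h : i <= j)
  (h' : lb (proj1_sig (proj1_sig x) i) (proj1_sig (proj1_sig x) j)) :
  arr (smap f x) h = arr (smap f (sedge h' (sok x i) (sok x j))) (isT : (ord0 : 'I_2) <= ord_max).
Proof.
rewrite -(ssact_ed h h' (sok x i) (sok x j)).
by symmetry; apply: arr_smap.
Qed.

Lemma cob_sub m (x : X m) (i : 'I_m.+1) :
  cob (smap f x) i = cob (smap f (svtx (sok x i))) ord0.
Proof. by rewrite -ssact_pt cob_smap. Qed.

Definition proj (a : P) : P := if a == v then d else a.
Lemma proj_ne a : proj a != v.
Proof. by rewrite /proj; case: (eqVneq a v) => // _; exact: dv. Qed.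
Lemma projE a : a != v -> proj a = a.
Proof. by rewrite /proj => /negbTE ->. Qed.

Definition Obin a (ha : a != v) : Obj C := cob (smap f (svtx ha)) ord0.
Definition Ein a b (ha : a != v) (hb : b != v) : Arr C :=
  dif (fun h : lb a b = true => arr (smap f (sedge h ha hb)) (isT : (ord0 : 'I_2) <= ord_max))
      (mkArr (cid (Obin ha))).

Definition Ob a := Obin (proj_ne a).
Definition E a b := Ein (proj_ne a) (proj_ne b).

Lemma Ob_vtx a (ha : a != v) : Ob a = cob (smap f (svtx ha)) ord0.
Proof.
rewrite /Ob /Obin; move: (proj_ne a); rewrite (projE ha) => ha'.
by rewrite (bool_irrelevance ha' ha).
Qed.

Lemma E_edge a b (h : lb a b) (ha : a != v) (hb : b != v) :
  E a b = arr (smap f (sedge h ha hb)) (isT : (ord0 : 'I_2) <= ord_max).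
Proof.
rewrite /E; move: (proj_ne a) (proj_ne b); rewrite (projE ha) (projE hb) => ha' hb'.
by rewrite /Ein (difT _ _ h) (bool_irrelevance ha' ha) (bool_irrelevance hb' hb).
Qed.

Lemma E_simp m (x : X m) (i j : 'I_m.+1) (h : i <= j) :
  arr (smap f x) h = E (proj1_sig (proj1_sig x) i) (proj1_sig (proj1_sig x) j).
Proof.
have h' := proj2_sig (proj1_sig x) i j h.
by rewrite (arr_sub h h'); symmetry; apply: E_edge.
Qed.

Lemma E_id a : a != v -> E a a = mkArr (cid (Ob a)).
Proof.
move=> ha; rewrite -(E_simp (svtx ha) (leqnn ord0)) arr_id.
by rewrite (Ob_vtx ha).
Qed.

Lemma E_src a b : a != v -> b != v -> lb a b -> src (E a b) = Ob a.
Proof.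
move=> ha hb h; rewrite (E_edge h ha hb).
transitivity (src (arr (smap f (sedge h ha hb)) (leqnn ord0))); first by [].
by rewrite E_simp E_id.
Qed.

Lemma E_tgt a b : a != v -> b != v -> lb a b -> tgt (E a b) = Ob b.
Proof.
move=> ha hb h; rewrite (E_edge h ha hb).
transitivity (tgt (arr (smap f (sedge h ha hb)) (leqnn (ord_max : 'I_2)))); first by [].
by rewrite E_simp E_id.
Qed.

Hypothesis ltr : forall a b c, lb a b -> lb b c -> lb a c.

Lemma E_comp a b c : a != v -> b != v -> c != v -> lb a b -> lb b c ->
  Acomp (E a b) (E b c) (E a c).
Proof.
move=> ha hb hc h1 h2.
have h3 := ltr h1 h2.
pose x := stri h1 h2 h3 ha hb hc.
rewrite -(E_simp x (isT : (ord0 : 'I_3) <= (@Ordinal 3 1 isT))).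
rewrite -(E_simp x (isT : (@Ordinal 3 1 isT) <= (@Ordinal 3 2 isT))).
rewrite -(E_simp x (isT : (ord0 : 'I_3) <= (@Ordinal 3 2 isT))).
exact: arr_comp.
Qed.

End Extract.


Section SetMax.
Variable n : nat.
Implicit Types A B : {set 'I_n.+1}.

Lemma setmax_ub A (i : 'I_n.+1) : i \in A -> i <= setmax A.
Proof. by move=> iA; rewrite /setmax; apply: (leq_bigmax_cond i). Qed.

Lemma setmax_in A (i0 : 'I_n.+1) : i0 \in A -> exists2 i : 'I_n.+1, i \in A & setmax A = i.
Proof.
move=> i0A; have : 0 < #|A| by apply/card_gt0P; exists i0.
by case/(eq_bigmax_cond (fun i : 'I_n.+1 => nat_of_ord i)) => i iA e; exists i.
Qed.

Lemma setmax_le A : setmax A <= n.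
Proof. by apply/bigmax_leqP => i _; rewrite -ltnS. Qed.

Lemma setmax_top A : ord_max \in A -> setmax A = n.
Proof.
move=> h; apply/eqP; rewrite eqn_leq setmax_le /=.
by have := setmax_ub h.
Qed.

Lemma setmax_topP A (i0 : 'I_n.+1) : i0 \in A -> setmax A = n -> ord_max \in A.
Proof.
move=> i0A; case: (setmax_in i0A) => i iA -> ein.
by have -> : ord_max = i by apply: val_inj.
Qed.

Lemma setmax_I A B (k : 'I_n.+1) : k \in A -> (forall i : 'I_n.+1, k <= i -> i \in B) ->
  setmax (A :&: B) = setmax A.
Proof.
move=> kA hB; apply/eqP; rewrite eqn_leq; apply/andP; split.
  apply/bigmax_leqP => i; rewrite inE => /andP [iA _]; exact: setmax_ub.
case: (setmax_in kA) => i iA ei; rewrite ei.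
apply: setmax_ub; rewrite inE iA hB //.
by have := setmax_ub kA; rewrite ei.
Qed.

End SetMax.


Section LLift.
Variables (C : category) (W : cmarking C).
Arguments W : clear implicits.
Variable HW : forall x, W x x (cid x).
Variables (n : nat) (k : 'I_n.+1).
Hypothesis kpos : 0 < k.
Variable f : msMap (LJ_ms k) (marked_nerve HW).

Notation V := (Lvert k).
Definition lb : rel V := fun A B => proj1_sig A \subset proj1_sig B.
Lemma lrefl a : lb a a. Proof. exact: subxx. Qed.
Lemma ltr a b c : lb a b -> lb b c -> lb a c. Proof. exact: subset_trans. Qed.
Notation top := (Ltop k).
Definition dd : V := exist _ [set k] (set11 k).

Lemma notop (a : V) : ord0 \notin proj1_sig a -> a != top.
Proof. by apply: contraNneq => ->; rewrite /= inE. Qed.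

Lemma dv : dd != top.
Proof. apply: notop; rewrite /= in_set1; apply/eqP => e; by move: kpos; rewrite -e. Qed.

Lemma top_le (b : V) : lb top b -> b = top.
Proof.
move=> h; apply: val_inj => /=; apply/eqP; rewrite eqEsubset subsetT /=.
exact: h.
Qed.

Definition Fs : sMap (subS (omitP_closed (fun a b : V => is_true (lb a b)) top)) (cnerve C) :=
  msmap f.

Definition Ob0 := Ob lrefl dv Fs.
Definition E0 := E lrefl dv Fs.

Definition R (a b : V) := [&& lb a b, a != top & b != top].
Lemma R1 a b : R a b -> lb a b. Proof. by case/and3P. Qed.
Lemma R2 a b : R a b -> a != top. Proof. by case/and3P. Qed.
Lemma R3 a b : R a b -> b != top. Proof. by case/and3P. Qed.

Definition Far a b (h : R a b) : Hom (Ob0 a) (Ob0 b) :=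
  castH (E_src lrefl dv Fs (R2 h) (R3 h) (R1 h)) (E_tgt lrefl dv Fs (R2 h) (R3 h) (R1 h))
    (hom (E0 a b)).

Lemma mkArr_Far a b (h : R a b) : mkArr (Far h) = E0 a b.
Proof. by rewrite /Far mkArr_castH mkArr_hom. Qed.

Lemma RL a b : R a b -> R a a.
Proof. by case/and3P => _ ha _; rewrite /R lrefl ha. Qed.
Lemma RR a b : R a b -> R b b.
Proof. by case/and3P => _ _ hb; rewrite /R lrefl hb. Qed.
Lemma Rtr a b c : R a b -> R b c -> R a c.
Proof. by case/and3P => h1 ha _ /and3P [h2 _ hc]; rewrite /R (ltr h1 h2) ha hc. Qed.

Lemma Far_id a (h : R a a) : Far h = cid (Ob0 a).
Proof. apply: castH_hom; apply: E_id; exact: R2 h. Qed.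

Lemma Far_comp a b c (h1 : R a b) (h2 : R b c) (h3 : R a c) : Far h3 = ccomp (Far h2) (Far h1).
Proof.
apply: castH_acomp; apply: E_comp; try exact: ltr.
- exact: R2 h1.
- exact: R2 h2.
- exact: R3 h2.
- exact: R1 h1.
- exact: R1 h2.
Qed.

Definition sz (a : V) := #|proj1_sig a|.
Lemma sz_lt a b : R a b -> a != b -> sz a < sz b.
Proof.
move=> /R1 h neq; apply: proper_card; rewrite properEneq; apply/andP; split; last exact: h.
by apply: contra neq => /eqP e; apply/eqP; apply: val_inj.
Qed.

Lemma bb_in : k \in [set i : 'I_n.+1 | k <= i].
Proof. by rewrite inE leqnn. Qed.
Definition bbV : V := exist _ [set i : 'I_n.+1 | k <= i] bb_in.
Lemma rr_in (a : V) : k \in proj1_sig a :&: [set i : 'I_n.+1 | k <= i].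
Proof. by rewrite inE (proj2_sig a) inE leqnn. Qed.
Definition rr (a : V) : V := exist _ (proj1_sig a :&: [set i : 'I_n.+1 | k <= i]) (rr_in a).

Lemma bb_ntop : bbV != top.
Proof. by apply: notop; rewrite /= inE -ltnNge. Qed.

Lemma rr_ntop a : rr a != top.
Proof. by apply: notop; rewrite /= !inE; apply/nandP; right; rewrite -ltnNge. Qed.

Lemma r_le a : R a a -> R (rr a) a.
Proof. by move=> h; rewrite /R rr_ntop (R2 h) /lb /= subsetIl. Qed.
Lemma r_bb a : R a a -> R (rr a) bbV.
Proof. by move=> h; rewrite /R rr_ntop bb_ntop /lb /= subsetIr. Qed.
Lemma r_mono a b : R a b -> R (rr a) (rr b).
Proof. by move=> h; rewrite /R !rr_ntop /lb /= setSI //; apply: R1 h. Qed.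

Lemma Far_W a b (h : R a b) : setmax (proj1_sig a) = setmax (proj1_sig b) -> W _ _ (Far h).
Proof.
move=> hm; apply: WA_castH.
rewrite /E0 (E_edge lrefl dv Fs (R1 h) (R2 h) (R3 h)).
have := @msmapP _ _ f (sedge lrefl (R1 h) (R2 h) (R3 h)) hm; exact.
Qed.

Lemma r_W a (h : R (rr a) a) : W _ _ (Far h).
Proof. apply: Far_W => /=; apply: setmax_I; [exact: (proj2_sig a) | by move=> i; rewrite inE]. Qed.

Definition Gp : pred V := fun a => ord_max \in proj1_sig a.

Lemma G_r a : R a a -> Gp a -> Gp (rr a).
Proof. by rewrite /Gp /= => _ h; rewrite inE h /= inE; apply: leq_ord. Qed.

Lemma G_bb c (h : R c bbV) : Gp c -> W _ _ (Far h).
Proof.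
move=> hc; apply: Far_W; rewrite !setmax_top //=.
by rewrite inE -ltnS.
Qed.

Section Ext.
Variables (Y : Obj C) (lam : forall a, R a a -> Hom (Ob0 a) Y).
Arguments lam : clear implicits.
Hypothesis lamN : forall a b (h : R a b) pa pb, ccomp (lam b pb) (Far h) = lam a pa.
Hypothesis lamW : forall a pa, Gp a -> W _ _ (lam a pa).

Definition ObL (a : V) := if a == top then Y else Ob0 a.
Definition EL (a b : V) : Arr C :=
  if b == top then
    (if a == top then mkArr (cid Y) else dif (fun p : R a a => mkArr (lam a p)) (mkArr (cid Y)))
  else E0 a b.

Lemma ntop_le a b : lb a b -> b != top -> a != top.
Proof. by move=> h; apply: contra => /eqP ea; subst a; rewrite (top_le h). Qed.

Lemma RE a : a != top -> R a a.
Proof. by move=> h; rewrite /R lrefl h. Qed.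

Lemma EL_lam a (h : a != top) : EL a top = mkArr (lam a (RE h)) /\ ObL a = Ob0 a.
Proof.
rewrite /EL /ObL eqxx (negbTE h); split => //.
by rewrite (difT _ _ (RE h)).
Qed.

Lemma EL_ntop a b : b != top -> EL a b = E0 a b.
Proof. by rewrite /EL => /negbTE ->. Qed.

Lemma ELsrc a b : True -> True -> lb a b -> src (EL a b) = ObL a.
Proof.
move=> _ _ h; case: (eqVneq b top) => [eb | nb].
  subst b; case: (eqVneq a top) => [ea | na].
    by subst a; rewrite /EL /ObL eqxx.
  by case: (EL_lam na) => -> ->.
have na := ntop_le h nb.
by rewrite (EL_ntop _ nb) /ObL (negbTE na) /E0 /Ob0 (E_src lrefl dv Fs na nb h).
Qed.

Lemma ELtgt a b : True -> True -> lb a b -> tgt (EL a b) = ObL b.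
Proof.
move=> _ _ h; case: (eqVneq b top) => [eb | nb].
  subst b; case: (eqVneq a top) => [ea | na].
    by subst a; rewrite /EL /ObL eqxx.
  by case: (EL_lam na) => -> _; rewrite /ObL eqxx.
have na := ntop_le h nb.
by rewrite (EL_ntop _ nb) /ObL (negbTE nb) /E0 /Ob0 (E_tgt lrefl dv Fs na nb h).
Qed.

Lemma ELid a : True -> lb a a -> EL a a = mkArr (cid (ObL a)).
Proof.
move=> _ _; case: (eqVneq a top) => [ea | na].
  by subst a; rewrite /EL /ObL eqxx.
by rewrite (EL_ntop _ na) /ObL (negbTE na) /E0 /Ob0 (E_id lrefl dv Fs na).
Qed.

Lemma ELcomp a b c : True -> True -> True -> lb a b -> lb b c ->
  Acomp (EL a b) (EL b c) (EL a c).
Proof.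
move=> _ _ _ h1 h2.
case: (eqVneq c top) => [ec | nc]; last first.
  have nb := ntop_le h2 nc; have na := ntop_le h1 nb.
  rewrite !EL_ntop //; apply: E_comp => //; exact: ltr.
subst c; case: (eqVneq b top) => [eb | nb].
  subst b; case: (eqVneq a top) => [ea | na].
    by subst a; rewrite /EL eqxx; apply: Acomp_idl.
  case: (EL_lam na) => -> _; rewrite /EL eqxx; exact: Acomp_idr.
have na := ntop_le h1 nb.
case: (EL_lam na) => -> _; case: (EL_lam nb) => -> _.
have hR : R a b by rewrite /R h1 na nb.
rewrite (EL_ntop _ nb) -(mkArr_Far hR) -(lamN hR (RE na) (RE nb)).
exact: Acomp_mk.
Qed.

Definition gmap : sMap (pnerve (fun a b : V => is_true (lb a b))) (cnerve C) :=
  fmapF ELsrc ELtgt ELid ELcomp (fun _ => I).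

Lemma gmap_mark (x : L_ms k 1) : mark x -> cmark W (smap gmap x).
Proof.
move=> hx.
change (WA W (arr (smap gmap x) (isT : (ord0 : 'I_2) <= ord_max))).
rewrite arr_fmapF.
set a := proj1_sig x ord0; set b := proj1_sig x ord_max.
have hab : lb a b := proj2_sig x ord0 ord_max isT.
have hm : setmax (proj1_sig a) = setmax (proj1_sig b) := hx.
case: (eqVneq b top) => [eb | nb].
  rewrite eb; case: (eqVneq a top) => [ea | na].
    by rewrite ea /EL eqxx; apply: HW.
  case: (EL_lam na) => -> _; apply: lamW.
  apply: setmax_topP (proj2_sig a) _.
  by rewrite hm eb setmax_top //= inE.
have na := ntop_le hab nb.
rewrite (EL_ntop _ nb).
have hR : R a b by rewrite /R hab na nb.
rewrite -(mkArr_Far hR); exact: Far_W.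
Qed.

Definition gm : msMap (L_ms k) (marked_nerve HW) := @MSMap (L_ms k) (marked_nerve HW) gmap gmap_mark.

Lemma gm_restr m (a : LJ_ms k m) : smap gm (smap (LJ_incl k) a) = smap f a.
Proof.
apply: csimp_ext => i j h.
rewrite [LHS]arr_fmapF.
rewrite EL_ntop; last exact: (sok a j).
symmetry; exact: (E_simp lrefl dv Fs a h).
Qed.

End Ext.

End LLift.

Theorem L_lift (C : category) (W : cmarking C) (HW : forall x, W x x (cid x))
  (HPL : proper_left W) n (k : 'I_n.+1) : 0 < k -> rlp (LJ_incl k) (marked_nerve HW).
Proof.
move=> kpos f.
have [Y [lam [lamN lamW]]] := cocone_exists HPL (@RL n k) (@Rtr n k) (Far_id kpos f)
  (Far_comp kpos f) (@sz_lt n k) (r_le kpos) (r_bb kpos) (r_mono kpos) (r_W kpos f)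
  (@G_r n k) (G_bb kpos f).
exists (gm lamN lamW) => m a.
exact: gm_restr.
Qed.


Definition lb3 : rel 'I_3 := fun a b => a <= b.
Lemma lrefl3 a : lb3 a a. Proof. exact: leqnn. Qed.

Definition o0 : 'I_3 := @Ordinal 3 0 isT.
Definition o1 : 'I_3 := @Ordinal 3 1 isT.
Definition o2 : 'I_3 := @Ordinal 3 2 isT.

Section Pair.
Variables (C : category) (X0 X1 X2 : Obj C) (g1 : Hom X0 X1) (g2 : Hom X1 X2).

Definition pOb (i : 'I_3) : Obj C := match val i with 0 => X0 | 1 => X1 | _ => X2 end.
Definition pE (i j : 'I_3) : Arr C :=
  match val i, val j with
  | 0, 0 => mkArr (cid X0) | 0, 1 => mkArr g1 | 0, _ => mkArr (ccomp g2 g1)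
  | 1, 0 => mkArr (cid X0) | 1, 1 => mkArr (cid X1) | 1, _ => mkArr g2
  | _, _ => mkArr (cid X2) end.

Lemma pEsrc a b : True -> True -> le3 a b -> src (pE a b) = pOb a.
Proof. by case: a => [[|[|[|a]]] ha]; case: b => [[|[|[|b]]] hb]. Qed.
Lemma pEtgt a b : True -> True -> le3 a b -> tgt (pE a b) = pOb b.
Proof. by case: a => [[|[|[|a]]] ha]; case: b => [[|[|[|b]]] hb]. Qed.
Lemma pEid a : True -> le3 a a -> pE a a = mkArr (cid (pOb a)).
Proof. by case: a => [[|[|[|a]]] ha]. Qed.
Lemma pEcomp a b c : True -> True -> True -> le3 a b -> le3 b c ->
  Acomp (pE a b) (pE b c) (pE a c).
Proof.
case: a => [[|[|[|a]]] ha]; case: b => [[|[|[|b]]] hb]; case: c => [[|[|[|c]]] hc] //= _ _ _;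
  rewrite /le3 //= => _ _; rewrite /pE /=;
  first [apply: Acomp_idl | apply: Acomp_idr | apply: Acomp_mk].
Qed.

Definition Dmap : sMap Delta2 (cnerve C) := fmapF pEsrc pEtgt pEid pEcomp (fun _ => I).

Lemma arr_Dmap m (x : Delta2 m) (i j : 'I_m.+1) (h : i <= j) :
  arr (smap Dmap x) h = pE (proj1_sig x i) (proj1_sig x j).
Proof. exact: arr_fmapF. Qed.

End Pair.

Definition dedge (a b : 'I_3) (h : lb3 a b) : Delta2 1 := pedge lrefl3 h.

Lemma hornP_v (a : 'I_3) : hornP (pvtx lrefl3 a).
Proof.
case: a => [[|[|[|a]]] ha]; [right | left | left | by []] => i //=.
Qed.

Definition hv (a : 'I_3) : Horn21 0 := exist _ (pvtx lrefl3 a) (hornP_v a).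

Lemma hornP_01 : hornP (dedge (isT : lb3 o0 o1)).
Proof. by right => -[[|[|u]] hu]. Qed.
Lemma hornP_12 : hornP (dedge (isT : lb3 o1 o2)).
Proof. by left => -[[|[|u]] hu]. Qed.

Definition he01 : Horn21 1 := exist _ _ hornP_01.
Definition he12 : Horn21 1 := exist _ _ hornP_12.

Lemma horn_eq m (e e' : Horn21 m) :
  (forall i, proj1_sig (proj1_sig e) i = proj1_sig (proj1_sig e') i) -> e = e'.
Proof.
case: e => [[fe pe] he]; case: e' => [[fe' pe'] he'] /= H.
have E : fe = fe' by apply: functional_extensionality.
subst fe'; apply: exist_eq; exact: exist_eq.
Qed.

Lemma delta_eq m (e e' : Delta2 m) :
  (forall i, proj1_sig e i = proj1_sig e' i) -> e = e'.
Proof.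
case: e => [fe pe]; case: e' => [fe' pe'] /= H.
have E : fe = fe' by apply: functional_extensionality.
by subst fe'; apply: exist_eq.
Qed.

Lemma I2_cases (u : 'I_2) : u = ord0 \/ u = ord_max.
Proof. by case: u => [[|[|u]] hu]; [left | right | by []]; apply: val_inj. Qed.

Lemma horn_edges (e : Horn21 1) :
  [\/ e = sact sdeg (hv (proj1_sig (proj1_sig e) ord0)), e = he01 | e = he12].
Proof.
case: e => [[fe pe] he] /=.
have hab : val (fe ord0) <= val (fe ord_max) := pe ord0 ord_max isT.
case: (eqVneq (fe ord0) (fe ord_max)) => [e01 | n01].
  by apply: Or31; apply: horn_eq => u; case: (I2_cases u) => -> //=; rewrite e01.
have hne : val (fe ord0) != val (fe ord_max) by rewrite val_eqE.
have h1 := ltn_ord (fe ord_max).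
have key : (val (fe ord0) == 0) && (val (fe ord_max) == 1) ||
           (val (fe ord0) == 1) && (val (fe ord_max) == 2).
  case: he => H; have := H ord0; have := H ord_max; move: hab hne h1; rewrite /=;
  move: (val (fe ord0)) (val (fe ord_max)) => x y;
  by case: x => [|[|[|x]]]; case: y => [|[|[|y]]].
case/orP: key => /andP [/eqP ea /eqP eb]; [apply: Or32 | apply: Or33];
  apply: horn_eq => u; case: (I2_cases u) => -> /=; apply: val_inj => //=.
Qed.


Section WC.
Variables (C : category) (W : cmarking C).
Arguments W : clear implicits.
Variable HW : forall x, W x x (cid x).

Lemma pE_W X0 X1 X2 (g1 : Hom X0 X1) (g2 : Hom X1 X2) a b :
  W _ _ g1 -> W _ _ g2 -> W _ _ (ccomp g2 g1) -> WA W (pE g1 g2 a b).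
Proof.
move=> w1 w2 w3.
by case: a => [[|[|[|a]]] ha]; case: b => [[|[|[|b]]] hb]; rewrite /pE /= ?WA_mk.
Qed.

Section Fwd.
Hypothesis Wc : forall x y z (g : Hom y z) (f : Hom x y), W _ _ f -> W _ _ g -> W _ _ (ccomp g f).
Variable h : sMap Horn21 (cnerve C).
Hypothesis hm : forall t : Horn21 1, cmark W (smap h t).

Definition hX (i : 'I_3) := cob (smap h (hv i)) ord0.

Lemma hv_sact (e : Horn21 1) (i : 'I_2) : sact (mono_pt i) e = hv (proj1_sig (proj1_sig e) i).
Proof. by apply: horn_eq. Qed.

Lemma cob_h (e : Horn21 1) (i : 'I_2) : cob (smap h e) i = hX (proj1_sig (proj1_sig e) i).
Proof. by rewrite /hX -hv_sact cob_smap. Qed.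

Definition hg (e : Horn21 1) : Hom (hX (proj1_sig (proj1_sig e) ord0)) (hX (proj1_sig (proj1_sig e) ord_max)) :=
  let u := arr (smap h e) (isT : (ord0 : 'I_2) <= ord_max) in
  castH (cob_h e ord0 : src u = _) (cob_h e ord_max : tgt u = _) (hom u).

Lemma mkArr_hg e : mkArr (hg e) = arr (smap h e) (isT : (ord0 : 'I_2) <= ord_max).
Proof. by rewrite /hg mkArr_castH mkArr_hom. Qed.

Lemma W_hg e : W _ _ (hg e).
Proof. rewrite /hg; exact: WA_castH (hm e). Qed.

Definition G1 : Hom (hX o0) (hX o1) := hg he01.
Definition G2 : Hom (hX o1) (hX o2) := hg he12.

Definition Gm : sMap Delta2 (cnerve C) := Dmap G1 G2.

Lemma pOb_hX a : pOb (hX o0) (hX o1) (hX o2) a = hX a.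
Proof. by case: a => [[|[|[|a]]] ha] //=; congr hX; apply: val_inj. Qed.

Lemma h_edge (e : Horn21 1) :
  arr (smap h e) (isT : (ord0 : 'I_2) <= ord_max) =
  pE G1 G2 (proj1_sig (proj1_sig e) ord0) (proj1_sig (proj1_sig e) ord_max).
Proof.
case: (horn_edges e) => ->.
- set a := proj1_sig (proj1_sig e) ord0.
  rewrite (@arr_smap _ _ h _ _ sdeg (hv a) _ _ (isT : (ord0 : 'I_2) <= ord_max) (leqnn ord0)) arr_id.
  rewrite /= pEid //; last by rewrite /le3.
  by have -> : pOb (hX o0) (hX o1) (hX o2) a = hX a := pOb_hX a.
- by rewrite /pE /= /G1; symmetry; exact: (mkArr_hg he01).
- by rewrite /pE /= /G2; symmetry; exact: (mkArr_hg he12).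
Qed.

Lemma Gm_restr m (t : Horn21 m) : smap Gm (proj1_sig t) = smap h t.
Proof.
apply: csimp_ext => i j hij.
rewrite arr_Dmap -(@arr_smap _ _ h _ _ (mono_ed hij) t _ _ (isT : (ord0 : 'I_2) <= ord_max) hij).
by rewrite h_edge.
Qed.

Lemma Gm_mark (t : Delta2 1) : cmark W (smap Gm t).
Proof.
change (WA W (arr (smap Gm t) (isT : (ord0 : 'I_2) <= ord_max))).
rewrite arr_Dmap; apply: pE_W; [exact: (W_hg he01) | exact: (W_hg he12) |].
apply: Wc; [exact: (W_hg he01) | exact: (W_hg he12)].
Qed.

End Fwd.

Lemma wc_of_comp :
  (forall x y z (g : Hom y z) (f : Hom x y), W _ _ f -> W _ _ g -> W _ _ (ccomp g f)) ->
  weakly_closed (marked_nerve HW).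
Proof.
move=> Wc h hm.
exists (Gm h); split.
  move=> m t; exact: Gm_restr.
move=> t; exact: Gm_mark.
Qed.

Lemma comp_of_wc : weakly_closed (marked_nerve HW) ->
  forall x y z (g : Hom y z) (f : Hom x y), W _ _ f -> W _ _ g -> W _ _ (ccomp g f).
Proof.
move=> wc x y z g f wf wg.
pose D := Dmap f g.
pose hh : sMap Horn21 (cnerve C) :=
  @SMap Horn21 (cnerve C) (fun m t => smap D (proj1_sig t)) (fun m n t x => smapP D t (proj1_sig x)).
have hhm : forall t : Horn21 1, mark (m := marked_nerve HW) (smap hh t).
  move=> t; change (WA W (arr (smap D (proj1_sig t)) (isT : (ord0 : 'I_2) <= ord_max))).
  rewrite arr_Dmap; case: (horn_edges t) => -> //=.
  by rewrite pEid //; exact: leqnn.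
have [G [hG GW]] := wc hh hhm.
pose s := ptri lrefl3 (isT : lb3 o0 o1) (isT : lb3 o1 o2) (isT : lb3 o0 o2).
have e01 : arr (smap G s) (isT : (ord0 : 'I_3) <= (o1 : 'I_3)) = mkArr f.
  rewrite (@arr_pnerve _ lb3 lrefl3 _ G _ s ord0 o1 isT isT).
  change (arr (smap G (proj1_sig he01)) (isT : (ord0 : 'I_2) <= ord_max) = mkArr f).
  by rewrite hG /= arr_Dmap.
have e12 : arr (smap G s) (isT : (o1 : 'I_3) <= (o2 : 'I_3)) = mkArr g.
  rewrite (@arr_pnerve _ lb3 lrefl3 _ G _ s o1 o2 isT isT).
  change (arr (smap G (proj1_sig he12)) (isT : (ord0 : 'I_2) <= ord_max) = mkArr g).
  by rewrite hG /= arr_Dmap.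
have := arr_comp (smap G s) (isT : (ord0 : 'I_3) <= (o1 : 'I_3)) (isT : (o1 : 'I_3) <= (o2 : 'I_3))
  (isT : (ord0 : 'I_3) <= (o2 : 'I_3)).
rewrite e01 e12 => /Acomp_fun e02.
have := GW (pedge lrefl3 (isT : lb3 o0 o2)).
change (WA W (arr (smap G (pedge lrefl3 (isT : lb3 o0 o2))) (isT : (ord0 : 'I_2) <= ord_max)) ->
  W _ _ (ccomp g f)).
by rewrite -(@arr_pnerve _ lb3 lrefl3 _ G _ s ord0 o2 isT isT) e02 WA_mk.
Qed.

End WC.


Section VSet.
Variables (n : nat) (k : 'I_n.+1).

Lemma vset_in (l : seq nat) (hk : val k \in l) : k \in [set i : 'I_n.+1 | val i \in l].
Proof. by rewrite inE. Qed.
Definition vset (l : seq nat) (hk : val k \in l) : Lvert k :=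
  exist _ [set i : 'I_n.+1 | val i \in l] (vset_in hk).

Lemma vset_mem l hk (x : 'I_n.+1) : (x \in proj1_sig (@vset l hk)) = (val x \in l).
Proof. by rewrite inE. Qed.

Lemma vsub l1 l2 hk1 hk2 : all (fun x => x \in l2) l1 ->
  proj1_sig (@vset l1 hk1) \subset proj1_sig (@vset l2 hk2).
Proof. by move/allP => H; apply/subsetP => i; rewrite !inE; apply: H. Qed.

Lemma vsub_top (a : Lvert k) : proj1_sig a \subset proj1_sig (Ltop k).
Proof. exact: subsetT. Qed.

Lemma vset_ntop l hk (i : 'I_n.+1) : val i \notin l -> @vset l hk != Ltop k.
Proof. by move=> hi; apply/eqP => e; move: hi; rewrite -(vset_mem hk) e /= inE. Qed.

Lemma top_eq (b : Lvert k) : (forall i : 'I_n.+1, i \in proj1_sig b) -> b = Ltop k.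
Proof. by move=> H; apply: val_inj => /=; apply/setP => i; rewrite H inE. Qed.

End VSet.

Lemma leq_sdeg : (sdeg ord0 <= sdeg ord_max). Proof. by []. Qed.

Lemma g_tri (C : category) (P : Type) (lb : rel P) (lrefl : forall a, lb a a)
  (g : sMap (pnerve (fun a b : P => is_true (lb a b))) (cnerve C)) a b c
  (h1 : lb a b) (h2 : lb b c) (h3 : lb a c) :
  Acomp (arr (smap g (pedge lrefl h1)) (isT : (ord0 : 'I_2) <= ord_max))
        (arr (smap g (pedge lrefl h2)) (isT : (ord0 : 'I_2) <= ord_max))
        (arr (smap g (pedge lrefl h3)) (isT : (ord0 : 'I_2) <= ord_max)).
Proof.
pose s := ptri lrefl h1 h2 h3.
rewrite -(@arr_pnerve _ lb lrefl _ g _ s ord0 (@Ordinal 3 1 isT) isT h1).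
rewrite -(@arr_pnerve _ lb lrefl _ g _ s (@Ordinal 3 1 isT) (@Ordinal 3 2 isT) isT h2).
rewrite -(@arr_pnerve _ lb lrefl _ g _ s ord0 (@Ordinal 3 2 isT) isT h3).
exact: arr_comp.
Qed.

Section ShapeMap.
Variables (C : category) (W : cmarking C).
Arguments W : clear implicits.
Variable HW : forall x, W x x (cid x).
Variables (n : nat) (k : 'I_n.+1).
Variables (Sh : Type) (leS : Sh -> Sh -> bool) (ObS : Sh -> Obj C) (ES : Sh -> Sh -> Arr C).
Variable phi : Lvert k -> Sh.
Hypothesis ES_src : forall s s', leS s s' -> src (ES s s') = ObS s.
Hypothesis ES_tgt : forall s s', leS s s' -> tgt (ES s s') = ObS s'.
Hypothesis ES_id : forall s, ES s s = mkArr (cid (ObS s)).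
Hypothesis ES_comp : forall s s' s'', leS s s' -> leS s' s'' -> Acomp (ES s s') (ES s' s'') (ES s s'').
Hypothesis phi_mono : forall a b : Lvert k, a <> Ltop k -> b <> Ltop k -> Lle a b -> leS (phi a) (phi b).
Hypothesis ES_W : forall a b : Lvert k, a <> Ltop k -> b <> Ltop k -> Lle a b ->
  setmax (proj1_sig a) = setmax (proj1_sig b) -> WA W (ES (phi a) (phi b)).

Definition ObP (a : Lvert k) := ObS (phi a).
Definition EP (a b : Lvert k) := ES (phi a) (phi b).

Lemma EP_src a b : a <> Ltop k -> b <> Ltop k -> Lle a b -> src (EP a b) = ObP a.
Proof. by move=> ha hb h; apply: ES_src; apply: phi_mono. Qed.
Lemma EP_tgt a b : a <> Ltop k -> b <> Ltop k -> Lle a b -> tgt (EP a b) = ObP b.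
Proof. by move=> ha hb h; apply: ES_tgt; apply: phi_mono. Qed.
Lemma EP_id a : a <> Ltop k -> Lle a a -> EP a a = mkArr (cid (ObP a)).
Proof. by move=> _ _; apply: ES_id. Qed.
Lemma EP_comp a b c : a <> Ltop k -> b <> Ltop k -> c <> Ltop k -> Lle a b -> Lle b c ->
  Acomp (EP a b) (EP b c) (EP a c).
Proof. by move=> ha hb hc h1 h2; apply: ES_comp; apply: phi_mono. Qed.

Definition fP : sMap (subS (omitP_closed (@Lle n k) (Ltop k))) (cnerve C) :=
  fmapS EP_src EP_tgt EP_id EP_comp (fun a h => h).

Lemma fP_mark (x : LJ_ms k 1) : mark x -> cmark W (smap fP x).
Proof.
move=> hx.
change (WA W (arr (smap fP x) (isT : (ord0 : 'I_2) <= ord_max))).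
rewrite arr_fmapS; apply: ES_W => //.
- exact: (proj2_sig x ord0).
- exact: (proj2_sig x ord_max).
- exact: (proj2_sig (proj1_sig x) ord0 ord_max isT).
Qed.

Definition fPm : msMap (LJ_ms k) (marked_nerve HW) := @MSMap (LJ_ms k) (marked_nerve HW) fP fP_mark.

Variable g : msMap (L_ms k) (marked_nerve HW).
Hypothesis hg : forall m (a : LJ_ms k m), smap g (smap (LJ_incl k) a) = smap fPm a.

Lemma g_edge (a b : Lvert k) (h : @lb n k a b) : a != Ltop k -> b != Ltop k ->
  arr (smap g (pedge (@lrefl n k) h)) (isT : (ord0 : 'I_2) <= ord_max) = ES (phi a) (phi b).
Proof.
move=> ha hb.
have := hg (sedge (@lrefl n k) h ha hb).
move=> /(f_equal (fun y => arr y (isT : (ord0 : 'I_2) <= ord_max))) e.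
transitivity (arr (smap fPm (sedge (@lrefl n k) h ha hb)) (isT : (ord0 : 'I_2) <= ord_max)).
  exact: e.
exact: arr_fmapS.
Qed.

Lemma g_mark (a b : Lvert k) (h : @lb n k a b) : setmax (proj1_sig a) = setmax (proj1_sig b) ->
  WA W (arr (smap g (pedge (@lrefl n k) h)) (isT : (ord0 : 'I_2) <= ord_max)).
Proof. move=> e; have := @msmapP _ _ g (pedge (@lrefl n k) h) e; exact. Qed.

End ShapeMap.


Inductive sp := S1 | S01 | S12.
Definition leSp (s s' : sp) : bool :=
  match s, s' with S1, _ => true | S01, S01 => true | S12, S12 => true | _, _ => false end.

Section SpanShape.
Variables (C : category) (X X' Y : Obj C) (w : Hom X X') (f : Hom X Y).
Definition ObSp (s : sp) := match s with S1 => X | S01 => X' | S12 => Y end.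
Definition ESp (s s' : sp) : Arr C :=
  match s, s' with
  | S1, S1 => mkArr (cid X) | S1, S01 => mkArr w | S1, S12 => mkArr f
  | S01, S01 => mkArr (cid X') | S12, S12 => mkArr (cid Y) | _, _ => mkArr (cid X) end.
Lemma ESp_src s s' : leSp s s' -> src (ESp s s') = ObSp s. Proof. by case: s; case: s'. Qed.
Lemma ESp_tgt s s' : leSp s s' -> tgt (ESp s s') = ObSp s'. Proof. by case: s; case: s'. Qed.
Lemma ESp_id s : ESp s s = mkArr (cid (ObSp s)). Proof. by case: s. Qed.
Lemma ESp_comp s s' s'' : leSp s s' -> leSp s' s'' -> Acomp (ESp s s') (ESp s' s'') (ESp s s'').
Proof.
by case: s; case: s'; case: s'' => //= _ _; first [apply: Acomp_idl | apply: Acomp_idr].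
Qed.
End SpanShape.


Lemma I3_cases (i : 'I_3) : [\/ i = o0, i = o1 | i = o2].
Proof. by case: i => [[|[|[|i]]] hi]; [apply: Or31 | apply: Or32 | apply: Or33 | by []]; apply: val_inj. Qed.

Section SpanL_1.
Variables (C : category) (W : cmarking C).
Arguments W : clear implicits.
Variable HW : forall x, W x x (cid x).
Hypothesis Hrlp : rlp (LJ_incl (@Ordinal 3 1 isT)) (marked_nerve HW).
Variables (X X' Y : Obj C) (w : Hom X X') (f : Hom X Y).
Hypothesis Ww : W _ _ w.


Notation kk := (@Ordinal 3 1 isT).
Notation jj := (@Ordinal 3 2 isT).

Definition phi1 (a : Lvert kk) : sp :=
  if ord0 \in proj1_sig a then S01 else if jj \in proj1_sig a then S12 else S1.

Lemma phi1_mono (a b : Lvert kk) : a <> Ltop kk -> b <> Ltop kk -> Lle a b -> leSp (phi1 a) (phi1 b).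
Proof.
move=> ha hb hab; rewrite /phi1.
case h0a: (ord0 \in proj1_sig a).
  by rewrite (subsetP hab _ h0a).
case hja: (jj \in proj1_sig a); last by case: ifP => //; case: ifP.
rewrite (subsetP hab _ hja).
case h0b: (ord0 \in proj1_sig b) => //.
exfalso; apply: hb; apply: top_eq => i; case: (I3_cases i) => ->.
- by rewrite (_ : o0 = ord0) //; apply: val_inj.
- exact: (proj2_sig b).
- exact: (subsetP hab _ hja).
Qed.

Lemma phi1_W (a b : Lvert kk) : a <> Ltop kk -> b <> Ltop kk -> Lle a b ->
  setmax (proj1_sig a) = setmax (proj1_sig b) -> WA W (ESp w f (phi1 a) (phi1 b)).
Proof.
move=> ha hb hab hm.
case Ea: (phi1 a); case Eb: (phi1 b); rewrite /= ?WA_mk; try exact: HW; try exact: Ww.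
have hja : jj \notin proj1_sig a.
  by move: Ea; rewrite /phi1; case: ifP => // _; case: ifP.
have hjb : jj \in proj1_sig b.
  by move: Eb; rewrite /phi1; case: ifP => // _; case: ifP.
have ejj : jj = ord_max by apply: val_inj.
rewrite ejj in hja hjb.
exfalso; move/negP: hja; apply; apply: (setmax_topP (proj2_sig a)).
by rewrite hm; apply: setmax_top.
Qed.

Definition f1 := fPm HW (@ESp_src C X X' Y w f) (@ESp_tgt C X X' Y w f) (@ESp_id C X X' Y w f)
  (@ESp_comp C X X' Y w f) phi1_mono phi1_W.

Lemma span_1 : exists Y' (f' : Hom X' Y') (w' : Hom Y Y'),
  [/\ W _ _ w', ccomp f' w = ccomp w' f & True].
Proof.
have [g hg] := Hrlp f1.
pose v1 := @vset 2 kk [:: 1] isT.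
pose v0k := @vset 2 kk [:: 0; 1] isT.
pose vkj := @vset 2 kk [:: 1; 2] isT.
have h1 : lb v1 v0k by apply: vsub.
have h2 : lb v1 vkj by apply: vsub.
have t1 : lb v1 (Ltop kk) by apply: vsub_top.
have t0k : lb v0k (Ltop kk) by apply: vsub_top.
have tkj : lb vkj (Ltop kk) by apply: vsub_top.
have n1 : v1 != Ltop kk by apply: (@vset_ntop 2 kk _ _ ord0).
have n0k : v0k != Ltop kk by apply: (@vset_ntop 2 kk _ _ jj).
have nkj : vkj != Ltop kk by apply: (@vset_ntop 2 kk _ _ ord0).
have T1 := g_tri (@lrefl 2 kk) g h1 t0k t1.
have T2 := g_tri (@lrefl 2 kk) g h2 tkj t1.
rewrite (g_edge hg h1 n1 n0k) in T1.
rewrite (g_edge hg h2 n1 nkj) in T2.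
have e1 : phi1 v1 = S1 by rewrite /phi1 !vset_mem.
have e0k : phi1 v0k = S01 by rewrite /phi1 !vset_mem.
have ekj : phi1 vkj = S12 by rewrite /phi1 !vset_mem.
rewrite e1 e0k /= in T1; rewrite e1 ekj /= in T2.
case/Acomp_inv: T1 => c1 [p1 [eu1 eu0]].
case/Acomp_inv: T2 => c2 [p2 [eu2 eu0']].
rewrite eu0 in eu0'.
have ec := mkArr_tgt eu0'; subst c2.
have ecomm := mkArr_inj eu0'.
have Wp2 : W _ _ p2.
  have := g_mark g tkj; rewrite eu2 WA_mk; apply.
  by rewrite !setmax_top // ?vset_mem // inE.
exists c1, p1, p2; split => //.

Qed.
End SpanL_1.

Section SpanL_2.
Variables (C : category) (W : cmarking C).
Arguments W : clear implicits.
Variable HW : forall x, W x x (cid x).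
Hypothesis Hrlp : rlp (LJ_incl (@Ordinal 3 2 isT)) (marked_nerve HW).
Variables (X X' Y : Obj C) (w : Hom X X') (f : Hom X Y).
Hypothesis Ww : W _ _ w.
Hypothesis Wf : W _ _ f.

Notation kk := (@Ordinal 3 2 isT).
Notation jj := (@Ordinal 3 1 isT).

Definition phi2 (a : Lvert kk) : sp :=
  if ord0 \in proj1_sig a then S01 else if jj \in proj1_sig a then S12 else S1.

Lemma phi2_mono (a b : Lvert kk) : a <> Ltop kk -> b <> Ltop kk -> Lle a b -> leSp (phi2 a) (phi2 b).
Proof.
move=> ha hb hab; rewrite /phi2.
case h0a: (ord0 \in proj1_sig a).
  by rewrite (subsetP hab _ h0a).
case hja: (jj \in proj1_sig a); last by case: ifP => //; case: ifP.
rewrite (subsetP hab _ hja).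
case h0b: (ord0 \in proj1_sig b) => //.
exfalso; apply: hb; apply: top_eq => i; case: (I3_cases i) => ->.
- by rewrite (_ : o0 = ord0) //; apply: val_inj.
- exact: (subsetP hab _ hja).
- exact: (proj2_sig b).
Qed.

Lemma phi2_W (a b : Lvert kk) : a <> Ltop kk -> b <> Ltop kk -> Lle a b ->
  setmax (proj1_sig a) = setmax (proj1_sig b) -> WA W (ESp w f (phi2 a) (phi2 b)).
Proof.
move=> ha hb hab hm.
case Ea: (phi2 a); case Eb: (phi2 b); rewrite /= ?WA_mk; try exact: HW; try exact: Ww.
exact: Wf.
Qed.

Definition f2 := fPm HW (@ESp_src C X X' Y w f) (@ESp_tgt C X X' Y w f) (@ESp_id C X X' Y w f)
  (@ESp_comp C X X' Y w f) phi2_mono phi2_W.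

Lemma span_2 : exists Y' (f' : Hom X' Y') (w' : Hom Y Y'),
  [/\ W _ _ w', ccomp f' w = ccomp w' f & W _ _ f'].
Proof.
have [g hg] := Hrlp f2.
pose v1 := @vset 2 kk [:: 2] isT.
pose v0k := @vset 2 kk [:: 0; 2] isT.
pose vkj := @vset 2 kk [:: 2; 1] isT.
have h1 : lb v1 v0k by apply: vsub.
have h2 : lb v1 vkj by apply: vsub.
have t1 : lb v1 (Ltop kk) by apply: vsub_top.
have t0k : lb v0k (Ltop kk) by apply: vsub_top.
have tkj : lb vkj (Ltop kk) by apply: vsub_top.
have n1 : v1 != Ltop kk by apply: (@vset_ntop 2 kk _ _ ord0).
have n0k : v0k != Ltop kk by apply: (@vset_ntop 2 kk _ _ jj).
have nkj : vkj != Ltop kk by apply: (@vset_ntop 2 kk _ _ ord0).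
have T1 := g_tri (@lrefl 2 kk) g h1 t0k t1.
have T2 := g_tri (@lrefl 2 kk) g h2 tkj t1.
rewrite (g_edge hg h1 n1 n0k) in T1.
rewrite (g_edge hg h2 n1 nkj) in T2.
have e1 : phi2 v1 = S1 by rewrite /phi2 !vset_mem.
have e0k : phi2 v0k = S01 by rewrite /phi2 !vset_mem.
have ekj : phi2 vkj = S12 by rewrite /phi2 !vset_mem.
rewrite e1 e0k /= in T1; rewrite e1 ekj /= in T2.
case/Acomp_inv: T1 => c1 [p1 [eu1 eu0]].
case/Acomp_inv: T2 => c2 [p2 [eu2 eu0']].
rewrite eu0 in eu0'.
have ec := mkArr_tgt eu0'; subst c2.
have ecomm := mkArr_inj eu0'.
have Wp2 : W _ _ p2.
  have := g_mark g tkj; rewrite eu2 WA_mk; apply.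
  by rewrite !setmax_top // ?vset_mem // inE.
exists c1, p1, p2; split => //.
have := g_mark g t0k; rewrite eu1 WA_mk; apply.
by rewrite !setmax_top // ?vset_mem // inE.
Qed.
End SpanL_2.


Inductive e5 := A0 | A1 | A2 | Cc | B5.
Definition leE (s s' : e5) : bool :=
  match s, s' with
  | A0, _ => true
  | A1, A1 | A1, Cc | A1, B5 => true
  | A2, A2 | A2, Cc | A2, B5 => true
  | Cc, Cc => true | B5, B5 => true
  | _, _ => false end.

Section EqShape.
Variables (C : category) (X' X Y : Obj C) (w : Hom X' X) (f g : Hom X Y).
Hypothesis hfg : ccomp f w = ccomp g w.
Definition ObE (s : e5) := match s with A0 => X' | B5 => Y | _ => X end.
Definition EE (s s' : e5) : Arr C :=
  match s, s' with
  | A0, A0 => mkArr (cid X') | A0, A1 | A0, A2 | A0, Cc => mkArr w | A0, B5 => mkArr (ccomp f w)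
  | A1, A1 | A1, Cc | A2, A2 | A2, Cc | Cc, Cc => mkArr (cid X)
  | A1, B5 => mkArr f | A2, B5 => mkArr g | B5, B5 => mkArr (cid Y)
  | _, _ => mkArr (cid X') end.
Lemma EE_src s s' : leE s s' -> src (EE s s') = ObE s. Proof. by case: s; case: s'. Qed.
Lemma EE_tgt s s' : leE s s' -> tgt (EE s s') = ObE s'. Proof. by case: s; case: s'. Qed.
Lemma EE_id s : EE s s = mkArr (cid (ObE s)). Proof. by case: s. Qed.
Lemma EE_comp s s' s'' : leE s s' -> leE s' s'' -> Acomp (EE s s') (EE s' s'') (EE s s'').
Proof.
case: s; case: s'; case: s'' => //= _ _;
  first [apply: Acomp_idl | apply: Acomp_idr | apply: Acomp_mk | (rewrite hfg; apply: Acomp_mk)].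
Qed.
End EqShape.

Definition q0 : 'I_4 := @Ordinal 4 0 isT.
Definition q1 : 'I_4 := @Ordinal 4 1 isT.
Definition q2 : 'I_4 := @Ordinal 4 2 isT.
Definition q3 : 'I_4 := @Ordinal 4 3 isT.

Lemma I4_cases (i : 'I_4) : i = q0 \/ i = q1 \/ i = q2 \/ i = q3.
Proof.
by case: i => [[|[|[|[|i]]]] hi]; [left | right; left | right; right; left | right; right; right | by []];
  apply: val_inj.
Qed.

Section EqL.
Variables (C : category) (W : cmarking C).
Arguments W : clear implicits.
Variable HW : forall x, W x x (cid x).
Hypothesis Hrlp : rlp (LJ_incl q1) (marked_nerve HW).
Variables (X' X Y : Obj C) (w : Hom X' X) (f g : Hom X Y).
Hypothesis hfg : ccomp f w = ccomp g w.
Hypothesis Ww : W _ _ w.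

Definition phiE (a : Lvert q1) : e5 :=
  if q3 \in proj1_sig a then B5
  else if (q0 \in proj1_sig a) && (q2 \in proj1_sig a) then Cc
  else if q0 \in proj1_sig a then A1
  else if q2 \in proj1_sig a then A2 else A0.

Definition isB (s : e5) : bool := if s is B5 then true else false.
Lemma phiE_B a : isB (phiE a) = (q3 \in proj1_sig a).
Proof. by rewrite /phiE; case: ifP => //; case: ifP => //; case: ifP => //; case: ifP. Qed.

Lemma phiE_mono (a b : Lvert q1) : a <> Ltop q1 -> b <> Ltop q1 -> Lle a b -> leE (phiE a) (phiE b).
Proof.
move=> ha hb hab.
have H0 : q0 \in proj1_sig a -> q0 \in proj1_sig b by apply: (subsetP hab).
have H2 : q2 \in proj1_sig a -> q2 \in proj1_sig b by apply: (subsetP hab).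
have H3 : q3 \in proj1_sig a -> q3 \in proj1_sig b by apply: (subsetP hab).
have nb : ~~ [&& q0 \in proj1_sig b, q2 \in proj1_sig b & q3 \in proj1_sig b].
  apply/negP => /and3P [b0 b2 b3]; apply: hb; apply: top_eq => i.
  by case: (I4_cases i) => [->|[->|[->|->]]] //; exact: (proj2_sig b).
move: H0 H2 H3 nb; rewrite /phiE.
case: (q0 \in proj1_sig a); case: (q2 \in proj1_sig a); case: (q3 \in proj1_sig a);
case: (q0 \in proj1_sig b); case: (q2 \in proj1_sig b); case: (q3 \in proj1_sig b) => //=;
by move=> H0 H2 H3; rewrite ?H0 ?H2 ?H3.
Qed.

Lemma phiE_W (a b : Lvert q1) : a <> Ltop q1 -> b <> Ltop q1 -> Lle a b ->
  setmax (proj1_sig a) = setmax (proj1_sig b) -> WA W (EE w f g (phiE a) (phiE b)).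
Proof.
move=> ha hb hab hm.
have key : phiE b = B5 -> phiE a = B5.
  move=> Eb; have h3b : q3 \in proj1_sig b by rewrite -phiE_B Eb.
  suff : isB (phiE a) by case: (phiE a).
  rewrite phiE_B.
  have e3 : q3 = ord_max by apply: val_inj.
  rewrite e3 in h3b *; apply: (setmax_topP (proj2_sig a)).
  by rewrite hm; apply: setmax_top.
case Ea: (phiE a); case Eb: (phiE b); rewrite /= ?WA_mk; try exact: HW; try exact: Ww;
  by have := key Eb; rewrite Ea.
Qed.

Definition fE := fPm HW (@EE_src C X' X Y w f g) (@EE_tgt C X' X Y w f g) (@EE_id C X' X Y w f g)
  (EE_comp hfg) phiE_mono phiE_W.

Lemma eq_L : exists Y' (v : Hom Y Y'), W _ _ v /\ ccomp v f = ccomp v g.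
Proof.
have [G hG] := Hrlp fE.
pose v13 := @vset 3 q1 [:: 1; 3] isT.
pose v013 := @vset 3 q1 [:: 0; 1; 3] isT.
pose v123 := @vset 3 q1 [:: 1; 2; 3] isT.
pose v01 := @vset 3 q1 [:: 0; 1] isT.
pose v12 := @vset 3 q1 [:: 1; 2] isT.
pose v012 := @vset 3 q1 [:: 0; 1; 2] isT.
have n13 : v13 != Ltop q1 by apply: (@vset_ntop 3 q1 _ _ q0).
have n013 : v013 != Ltop q1 by apply: (@vset_ntop 3 q1 _ _ q2).
have n123 : v123 != Ltop q1 by apply: (@vset_ntop 3 q1 _ _ q0).
have n01 : v01 != Ltop q1 by apply: (@vset_ntop 3 q1 _ _ q2).
have n12 : v12 != Ltop q1 by apply: (@vset_ntop 3 q1 _ _ q0).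
have n012 : v012 != Ltop q1 by apply: (@vset_ntop 3 q1 _ _ q3).
have p13 : phiE v13 = B5 by rewrite /phiE !vset_mem.
have p013 : phiE v013 = B5 by rewrite /phiE !vset_mem.
have p123 : phiE v123 = B5 by rewrite /phiE !vset_mem.
have p01 : phiE v01 = A1 by rewrite /phiE !vset_mem.
have p12 : phiE v12 = A2 by rewrite /phiE !vset_mem.
have p012 : phiE v012 = Cc by rewrite /phiE !vset_mem.
have s1 : lb v13 v013 by apply: vsub.
have s2 : lb v13 v123 by apply: vsub.
have s3 : lb v01 v013 by apply: vsub.
have s4 : lb v12 v123 by apply: vsub.
have s5 : lb v01 v012 by apply: vsub.
have s6 : lb v12 v012 by apply: vsub.
have t13 : lb v13 (Ltop q1) by apply: vsub_top.
have t013 : lb v013 (Ltop q1) by apply: vsub_top.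
have t123 : lb v123 (Ltop q1) by apply: vsub_top.
have t01 : lb v01 (Ltop q1) by apply: vsub_top.
have t12 : lb v12 (Ltop q1) by apply: vsub_top.
have t012 : lb v012 (Ltop q1) by apply: vsub_top.
have T1 := g_tri (@lrefl 3 q1) G s1 t013 t13.
have T2 := g_tri (@lrefl 3 q1) G s2 t123 t13.
have T3 := g_tri (@lrefl 3 q1) G s3 t013 t01.
have T4 := g_tri (@lrefl 3 q1) G s4 t123 t12.
have T5 := g_tri (@lrefl 3 q1) G s5 t012 t01.
have T6 := g_tri (@lrefl 3 q1) G s6 t012 t12.
rewrite (g_edge hG s1 n13 n013) p13 p013 /= in T1.
rewrite (g_edge hG s2 n13 n123) p13 p123 /= in T2.
rewrite (g_edge hG s3 n01 n013) p01 p013 /= in T3.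
rewrite (g_edge hG s4 n12 n123) p12 p123 /= in T4.
rewrite (g_edge hG s5 n01 n012) p01 p012 /= in T5.
rewrite (g_edge hG s6 n12 n012) p12 p012 /= in T6.
case/Acomp_inv: T1 => c [h [e013 e13]]; rewrite ccomp_id_r in e13.
case/Acomp_inv: T2 => c2 [h2 [e123 e13']]; rewrite ccomp_id_r e13 in e13'.
have ec := mkArr_tgt e13'; subst c2.
have eh := mkArr_inj e13'; subst h2.
rewrite e013 in T3; have e01 := Acomp_fun T3.
rewrite e123 in T4; have e12 := Acomp_fun T4.
case/Acomp_inv: T5 => c3 [q [e012 e01']]; rewrite ccomp_id_r e01 in e01'.
rewrite e012 in T6; have e12' := Acomp_fun T6.
rewrite ccomp_id_r e12 in e12'.
have ec3 := mkArr_tgt e01'; subst c3.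
have E1 := mkArr_inj e01'; have E2 := mkArr_inj e12'.
exists c, h; split; last by rewrite E1 E2.
have := g_mark G t13; rewrite e13 WA_mk; apply.
by rewrite !setmax_top // ?vset_mem // inE.
Qed.

End EqL.


Theorem part1 (C : category) (W : cmarking C) (HW : forall x : Obj C, W x x (cid x)) :
  proper_left W <-> CLF (marked_nerve HW).
Proof.
split.
  move=> HPL; split.
    apply: wc_of_comp; exact: Wcomp.
  move=> n k _ kpos; exact: L_lift.
case=> wc R; split.
- exact: comp_of_wc.
- exact: HW.
- move=> X Y X' f w Ww.
  case: (classic (W _ _ f)) => Wf.
    have [Y' [f' [w' [H1 H2 H3]]]] := span_2 (R 2 (@Ordinal 3 2 isT) isT isT) Ww Wf.
    by exists Y', f', w'; split.
  have [Y' [f' [w' [H1 H2 _]]]] := span_1 (R 2 (@Ordinal 3 1 isT) isT isT) f Ww.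
  by exists Y', f', w'; split => // /Wf.
- move=> X Y f g [X' [w [Ww e]]].
  exact: (eq_L (R 3 q1 isT isT) e Ww).
Qed.


Section SetMin.
Variable n : nat.
Implicit Types A B : {set 'I_n.+1}.

Lemma setmin_lb A (i : 'I_n.+1) : i \in A -> setmin A <= i.
Proof.
rewrite /setmin => iA.
have : i \in index_enum 'I_n.+1 by rewrite mem_index_enum.
elim: (index_enum _) => // x s IH.
rewrite in_cons big_cons => /orP [/eqP <- | iS].
  by rewrite iA geq_minl.
case: ifP => _; last exact: IH.
exact: leq_trans (geq_minr _ _) (IH iS).
Qed.

Lemma setmin_in A (i0 : 'I_n.+1) : i0 \in A -> exists2 i : 'I_n.+1, i \in A & setmin A = i.
Proof.
move=> i0A.
have : (setmin A == n) || [exists i in A, val i == setmin A].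
  rewrite /setmin; elim/big_ind: _ => [|x y hx hy|i iA].
  - by rewrite eqxx.
  - by case: (leqP x y).
  - apply/orP; right; apply/existsP; exists i; by rewrite iA eqxx.
case/orP => [/eqP e | /existsP [i /andP [iA /eqP e]]].
  exists i0 => //; apply/eqP; rewrite eqn_leq setmin_lb // e.
  exact: leq_ord.
by exists i.
Qed.

Lemma setmin_0 A : ord0 \in A -> setmin A = 0.
Proof. by move=> h; apply/eqP; rewrite -leqn0; apply: (setmin_lb h). Qed.

Lemma setmin_0P A (i0 : 'I_n.+1) : i0 \in A -> setmin A = 0 -> ord0 \in A.
Proof.
move=> i0A; case: (setmin_in i0A) => i iA -> ein.
by have -> : ord0 = i by apply: val_inj.
Qed.

Lemma setmin_I A B (k : 'I_n.+1) : k \in A -> (forall i : 'I_n.+1, i <= k -> i \in B) ->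
  setmin (A :&: B) = setmin A.
Proof.
move=> kA hB.
have kAB : k \in A :&: B by rewrite inE kA hB.
case: (setmin_in kAB) => i iAB ei.
case: (setmin_in kA) => j jA ej.
apply/eqP; rewrite eqn_leq; apply/andP; split.
  rewrite ej; apply: setmin_lb; rewrite inE jA hB //.
  by rewrite -ej; apply: setmin_lb.
by rewrite ei; apply: setmin_lb; move: iAB; rewrite inE => /andP [].
Qed.

End SetMin.


Lemma op_ccomp (C : category) (x y z : Obj C) (g : @Hom (op_category C) y z)
  (f : @Hom (op_category C) x y) :
  @ccomp (op_category C) x y z g f = @ccomp C z y x f g.
Proof. by []. Qed.

Section RLift.
Variables (C : category) (W : cmarking C).
Arguments W : clear implicits.
Variable HW : forall x, W x x (cid x).
Variables (n : nat) (k : 'I_n.+1).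
Hypothesis klt : k < n.
Variable f : msMap (RJ_ms k) (marked_nerve HW).

Notation V := (Lvert k).
Notation D := (op_category C).
Definition lbR : rel V := fun A B => proj1_sig B \subset proj1_sig A.
Lemma lreflR a : lbR a a. Proof. exact: subxx. Qed.
Lemma ltrR a b c : lbR a b -> lbR b c -> lbR a c.
Proof. by move=> h1 h2; apply: subset_trans h2 h1. Qed.
Notation top := (Ltop k).

Lemma notopR (a : V) : ord_max \notin proj1_sig a -> a != top.
Proof. by apply: contraNneq => ->; rewrite /= inE. Qed.

Lemma dvR : dd k != top.
Proof.
apply: notopR; rewrite /= in_set1; apply/eqP => e.
by move: klt; rewrite -e ltnn.
Qed.

Lemma top_leR (b : V) : lbR b top -> b = top.
Proof. move=> h; apply: val_inj => /=; apply/eqP; rewrite eqEsubset subsetT /=; exact: h. Qed.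

Definition FsR : sMap (subS (omitP_closed (fun a b : V => is_true (lbR a b)) top)) (cnerve C) :=
  msmap f.

Notation ObR := (Ob lreflR dvR FsR).
Notation ER := (E lreflR dvR FsR).

Definition FarR a b (h : R a b) : @Hom D (ObR a) (ObR b) :=
  castH (E_src lreflR dvR FsR (R3 h) (R2 h) (R1 h)) (E_tgt lreflR dvR FsR (R3 h) (R2 h) (R1 h))
    (hom (ER b a)).

Lemma mkArr_FarR a b (h : R a b) : mkArr (FarR h : @Hom C (ObR b) (ObR a)) = ER b a.
Proof. by rewrite /FarR mkArr_castH mkArr_hom. Qed.

Lemma FarR_id a (h : R a a) : FarR h = @cid D (ObR a).
Proof.
change ((FarR h : @Hom C (ObR a) (ObR a)) = cid (ObR a)).
rewrite /FarR; apply: castH_hom; apply: E_id; exact: R2 h.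
Qed.

Lemma FarR_comp a b c (h1 : R a b) (h2 : R b c) (h3 : R a c) :
  FarR h3 = @ccomp D _ _ _ (FarR h2) (FarR h1).
Proof.
rewrite op_ccomp /FarR.
exact: (castH_acomp _ _ _ _ _ _ (E_comp lreflR dvR FsR ltrR (R3 h2) (R2 h2) (R2 h1) (R1 h2) (R1 h1))).
Qed.

Lemma bbR_in : k \in [set i : 'I_n.+1 | i <= k].
Proof. by rewrite inE leqnn. Qed.
Definition bbR : V := exist _ [set i : 'I_n.+1 | i <= k] bbR_in.
Lemma rrR_in (a : V) : k \in proj1_sig a :&: [set i : 'I_n.+1 | i <= k].
Proof. by rewrite inE (proj2_sig a) inE leqnn. Qed.
Definition rrR (a : V) : V := exist _ (proj1_sig a :&: [set i : 'I_n.+1 | i <= k]) (rrR_in a).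

Lemma bbR_ntop : bbR != top.
Proof. by apply: notopR; rewrite /= inE -ltnNge. Qed.

Lemma rrR_ntop a : rrR a != top.
Proof. by apply: notopR; rewrite /= !inE; apply/nandP; right; rewrite -ltnNge. Qed.

Lemma rR_le a : R a a -> R (rrR a) a.
Proof. by move=> h; rewrite /R rrR_ntop (R2 h) /lb /= subsetIl. Qed.
Lemma rR_bb a : R a a -> R (rrR a) bbR.
Proof. by move=> h; rewrite /R rrR_ntop bbR_ntop /lb /= subsetIr. Qed.
Lemma rR_mono a b : R a b -> R (rrR a) (rrR b).
Proof. by move=> h; rewrite /R !rrR_ntop /lb /= setSI //; apply: R1 h. Qed.

Lemma FarR_W a b (h : R a b) : setmin (proj1_sig b) = setmin (proj1_sig a) ->
  op_marking W (FarR h).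
Proof.
move=> hm; rewrite /op_marking; apply: WA_castH.
rewrite (E_edge lreflR dvR FsR (R1 h) (R3 h) (R2 h)).
have := @msmapP _ _ f (sedge lreflR (R1 h) (R3 h) (R2 h)) hm; exact.
Qed.

Lemma rR_W a (h : R (rrR a) a) : op_marking W (FarR h).
Proof.
apply: FarR_W => /=; symmetry; apply: setmin_I; [exact: (proj2_sig a) | by move=> i; rewrite inE].
Qed.

Definition GpR : pred V := fun a => ord0 \in proj1_sig a.

Lemma GR_r a : R a a -> GpR a -> GpR (rrR a).
Proof. by rewrite /GpR /= => _ h; rewrite inE h /= inE. Qed.

Lemma GR_bb c (h : R c bbR) : GpR c -> op_marking W (FarR h).
Proof. move=> hc; apply: FarR_W; rewrite (setmin_0 hc) setmin_0 //= inE; exact: leq0n. Qed.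

Section Ext.
Variables (Y : Obj C) (lam : forall a, R a a -> @Hom D (ObR a) Y).
Arguments lam : clear implicits.
Hypothesis lamN : forall a b (h : R a b) pa pb, @ccomp D _ _ _ (lam b pb) (FarR h) = lam a pa.
Hypothesis lamW : forall a pa, GpR a -> op_marking W (lam a pa).

Definition lamC a (p : R a a) : @Hom C Y (ObR a) := lam a p.

Definition ObLR (a : V) := if a == top then Y else ObR a.
Definition ELR (a b : V) : Arr C :=
  if a == top then
    (if b == top then mkArr (cid Y) else dif (fun p : R b b => mkArr (lamC p)) (mkArr (cid Y)))
  else ER a b.

Lemma ntop_leR a b : lbR a b -> a != top -> b != top.
Proof. by move=> h; apply: contra => /eqP eb; subst b; rewrite (top_leR h). Qed.

Lemma ELR_lam b (h : b != top) : ELR top b = mkArr (lamC (RE h)) /\ ObLR b = ObR b.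
Proof.
rewrite /ELR /ObLR eqxx (negbTE h); split => //.
by rewrite (difT _ _ (RE h)).
Qed.

Lemma ELR_ntop a b : a != top -> ELR a b = ER a b.
Proof. by rewrite /ELR => /negbTE ->. Qed.

Lemma ELRsrc a b : True -> True -> lbR a b -> src (ELR a b) = ObLR a.
Proof.
move=> _ _ h; case: (eqVneq a top) => [ea | na].
  subst a; case: (eqVneq b top) => [eb | nb].
    by subst b; rewrite /ELR /ObLR eqxx.
  by case: (ELR_lam nb) => -> _; rewrite /ObLR eqxx.
have nb := ntop_leR h na.
by rewrite (ELR_ntop _ na) /ObLR (negbTE na) (E_src lreflR dvR FsR na nb h).
Qed.

Lemma ELRtgt a b : True -> True -> lbR a b -> tgt (ELR a b) = ObLR b.
Proof.
move=> _ _ h; case: (eqVneq a top) => [ea | na].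
  subst a; case: (eqVneq b top) => [eb | nb].
    by subst b; rewrite /ELR /ObLR eqxx.
  by case: (ELR_lam nb) => -> ->.
have nb := ntop_leR h na.
by rewrite (ELR_ntop _ na) /ObLR (negbTE nb) (E_tgt lreflR dvR FsR na nb h).
Qed.

Lemma ELRid a : True -> lbR a a -> ELR a a = mkArr (cid (ObLR a)).
Proof.
move=> _ _; case: (eqVneq a top) => [ea | na].
  by subst a; rewrite /ELR /ObLR eqxx.
by rewrite (ELR_ntop _ na) /ObLR (negbTE na) (E_id lreflR dvR FsR na).
Qed.

Lemma ELRcomp a b c : True -> True -> True -> lbR a b -> lbR b c ->
  Acomp (ELR a b) (ELR b c) (ELR a c).
Proof.
move=> _ _ _ h1 h2.
case: (eqVneq a top) => [ea | na]; last first.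
  have nb := ntop_leR h1 na; have nc := ntop_leR h2 nb.
  rewrite !ELR_ntop //; apply: E_comp => //; exact: ltrR.
subst a; case: (eqVneq b top) => [eb | nb].
  subst b; case: (eqVneq c top) => [ec | nc].
    by subst c; rewrite /ELR eqxx; apply: Acomp_idl.
  case: (ELR_lam nc) => -> _; rewrite /ELR eqxx; exact: Acomp_idl.
have nc := ntop_leR h2 nb.
case: (ELR_lam nb) => -> _; case: (ELR_lam nc) => -> _.
have hR : R c b by apply/and3P; split.
rewrite (ELR_ntop _ nb) -(mkArr_FarR hR).
have := lamN hR (RE nc) (RE nb).
rewrite /lamC => <-.
exact: Acomp_mk.
Qed.

Definition gmapR : sMap (pnerve (fun a b : V => is_true (lbR a b))) (cnerve C) :=
  fmapF ELRsrc ELRtgt ELRid ELRcomp (fun _ => I).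

Lemma gmapR_mark (x : R_ms k 1) : mark x -> cmark W (smap gmapR x).
Proof.
move=> hx.
change (WA W (arr (smap gmapR x) (isT : (ord0 : 'I_2) <= ord_max))).
rewrite arr_fmapF.
set a := proj1_sig x ord0; set b := proj1_sig x ord_max.
have hab : lbR a b := proj2_sig x ord0 ord_max isT.
have hm : setmin (proj1_sig a) = setmin (proj1_sig b) := hx.
case: (eqVneq a top) => [ea | na].
  rewrite ea; case: (eqVneq b top) => [eb | nb].
    by rewrite eb /ELR eqxx; apply: HW.
  case: (ELR_lam nb) => -> _; apply: lamW.
  apply: setmin_0P (proj2_sig b) _.
  by rewrite -hm ea setmin_0 //= inE.
have nb := ntop_leR hab na.
rewrite (ELR_ntop _ na).
have hR : R b a by apply/and3P; split.
rewrite -(mkArr_FarR hR); exact: FarR_W.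
Qed.

Definition gmR : msMap (R_ms k) (marked_nerve HW) :=
  @MSMap (R_ms k) (marked_nerve HW) gmapR gmapR_mark.

Lemma gmR_restr m (a : RJ_ms k m) : smap gmR (smap (RJ_incl k) a) = smap f a.
Proof.
apply: csimp_ext => i j h.
rewrite [LHS]arr_fmapF.
rewrite ELR_ntop; last exact: (sok a i).
symmetry; exact: (E_simp lreflR dvR FsR a h).
Qed.

End Ext.
End RLift.

Theorem R_lift (C : category) (W : cmarking C) (HW : forall x, W x x (cid x))
  (HPR : proper_right W) n (k : 'I_n.+1) : k < n -> rlp (RJ_incl k) (marked_nerve HW).
Proof.
move=> klt f.
have [Y [lam [lamN lamW]]] := cocone_exists HPR (@RL n k) (@Rtr n k) (FarR_id klt f)
  (FarR_comp klt f) (@sz_lt n k) (rR_le klt) (rR_bb klt) (rR_mono klt) (rR_W klt f)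
  (@GR_r n k) (GR_bb klt f).
exists (gmR lamN lamW) => m a.
exact: gmR_restr.
Qed.


Lemma Acomp_inv2 (C : category) b c (g : @Hom C b c) u w : Acomp u (mkArr g) w ->
  exists a (h : Hom a b), u = mkArr h /\ w = mkArr (ccomp g h).
Proof.
case=> a' [b' [c' [h [g' [e1 e2 e3]]]]].
have eb := mkArr_src e2; have ec := mkArr_tgt e2; subst b' c'.
have eg := mkArr_inj e2; subst g'.
by exists a', h.
Qed.

Section ShapeMapR.
Variables (C : category) (W : cmarking C).
Arguments W : clear implicits.
Variable HW : forall x, W x x (cid x).
Variables (n : nat) (k : 'I_n.+1).
Variables (Sh : Type) (leS : Sh -> Sh -> bool) (ObS : Sh -> Obj C) (ES : Sh -> Sh -> Arr C).
Variable phi : Lvert k -> Sh.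
Hypothesis ES_src : forall s s', leS s s' -> src (ES s s') = ObS s.
Hypothesis ES_tgt : forall s s', leS s s' -> tgt (ES s s') = ObS s'.
Hypothesis ES_id : forall s, ES s s = mkArr (cid (ObS s)).
Hypothesis ES_comp : forall s s' s'', leS s s' -> leS s' s'' -> Acomp (ES s s') (ES s' s'') (ES s s'').
Hypothesis phi_mono : forall a b : Lvert k, a <> Ltop k -> b <> Ltop k -> Rle a b -> leS (phi a) (phi b).
Hypothesis ES_W : forall a b : Lvert k, a <> Ltop k -> b <> Ltop k -> Rle a b ->
  setmin (proj1_sig a) = setmin (proj1_sig b) -> WA W (ES (phi a) (phi b)).

Definition ObPR (a : Lvert k) := ObS (phi a).
Definition EPR (a b : Lvert k) := ES (phi a) (phi b).

Lemma EP_srcR a b : a <> Ltop k -> b <> Ltop k -> Rle a b -> src (EPR a b) = ObPR a.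
Proof. by move=> ha hb h; apply: ES_src; apply: phi_mono. Qed.
Lemma EP_tgtR a b : a <> Ltop k -> b <> Ltop k -> Rle a b -> tgt (EPR a b) = ObPR b.
Proof. by move=> ha hb h; apply: ES_tgt; apply: phi_mono. Qed.
Lemma EP_idR a : a <> Ltop k -> Rle a a -> EPR a a = mkArr (cid (ObPR a)).
Proof. by move=> _ _; apply: ES_id. Qed.
Lemma EP_compR a b c : a <> Ltop k -> b <> Ltop k -> c <> Ltop k -> Rle a b -> Rle b c ->
  Acomp (EPR a b) (EPR b c) (EPR a c).
Proof. by move=> ha hb hc h1 h2; apply: ES_comp; apply: phi_mono. Qed.

Definition fPR : sMap (subS (omitP_closed (@Rle n k) (Ltop k))) (cnerve C) :=
  fmapS EP_srcR EP_tgtR EP_idR EP_compR (fun a h => h).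

Lemma fP_markR (x : RJ_ms k 1) : mark x -> cmark W (smap fPR x).
Proof.
move=> hx.
change (WA W (arr (smap fPR x) (isT : (ord0 : 'I_2) <= ord_max))).
rewrite arr_fmapS; apply: ES_W => //.
- exact: (proj2_sig x ord0).
- exact: (proj2_sig x ord_max).
- exact: (proj2_sig (proj1_sig x) ord0 ord_max isT).
Qed.

Definition fPmR : msMap (RJ_ms k) (marked_nerve HW) := @MSMap (RJ_ms k) (marked_nerve HW) fPR fP_markR.

Variable g : msMap (R_ms k) (marked_nerve HW).
Hypothesis hg : forall m (a : RJ_ms k m), smap g (smap (RJ_incl k) a) = smap fPmR a.

Lemma g_edgeR (a b : Lvert k) (h : @lbR n k a b) : a != Ltop k -> b != Ltop k ->
  arr (smap g (pedge (@lreflR n k) h)) (isT : (ord0 : 'I_2) <= ord_max) = ES (phi a) (phi b).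
Proof.
move=> ha hb.
have := hg (sedge (@lreflR n k) h ha hb).
move=> /(f_equal (fun y => arr y (isT : (ord0 : 'I_2) <= ord_max))) e.
transitivity (arr (smap fPmR (sedge (@lreflR n k) h ha hb)) (isT : (ord0 : 'I_2) <= ord_max)).
  exact: e.
exact: arr_fmapS.
Qed.

Lemma g_markR (a b : Lvert k) (h : @lbR n k a b) : setmin (proj1_sig a) = setmin (proj1_sig b) ->
  WA W (arr (smap g (pedge (@lreflR n k) h)) (isT : (ord0 : 'I_2) <= ord_max)).
Proof. move=> e; have := @msmapP _ _ g (pedge (@lreflR n k) h) e; exact. Qed.

End ShapeMapR.


Definition leSpR (s s' : sp) : bool := leSp s' s.

Section SpanShapeR.
Variables (C : category) (X X' Y : Obj C) (w : Hom X' X) (f : Hom Y X).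
Definition ESpR (s s' : sp) : Arr C :=
  match s, s' with
  | S1, S1 => mkArr (cid X) | S01, S1 => mkArr w | S12, S1 => mkArr f
  | S01, S01 => mkArr (cid X') | S12, S12 => mkArr (cid Y) | _, _ => mkArr (cid X) end.
Lemma ESpR_src s s' : leSpR s s' -> src (ESpR s s') = ObSp X X' Y s. Proof. by case: s; case: s'. Qed.
Lemma ESpR_tgt s s' : leSpR s s' -> tgt (ESpR s s') = ObSp X X' Y s'. Proof. by case: s; case: s'. Qed.
Lemma ESpR_id s : ESpR s s = mkArr (cid (ObSp X X' Y s)). Proof. by case: s. Qed.
Lemma ESpR_comp s s' s'' : leSpR s s' -> leSpR s' s'' -> Acomp (ESpR s s') (ESpR s' s'') (ESpR s s'').
Proof.
by case: s; case: s'; case: s'' => //= _ _; first [apply: Acomp_idl | apply: Acomp_idr].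
Qed.
End SpanShapeR.

Section SpanR_1.
Variables (C : category) (W : cmarking C).
Arguments W : clear implicits.
Variable HW : forall x, W x x (cid x).
Hypothesis Hrlp : rlp (RJ_incl (@Ordinal 3 1 isT)) (marked_nerve HW).
Variables (X X' Y : Obj C) (w : Hom X' X) (f : Hom Y X).
Hypothesis Ww : W _ _ w.


Notation kk := (@Ordinal 3 1 isT).
Notation jj := (@Ordinal 3 0 isT).

Definition phiR1 (a : Lvert kk) : sp :=
  if o2 \in proj1_sig a then S01 else if jj \in proj1_sig a then S12 else S1.

Lemma phiR1_mono (a b : Lvert kk) : a <> Ltop kk -> b <> Ltop kk -> Rle a b -> leSpR (phiR1 a) (phiR1 b).
Proof.
move=> ha hb hab; rewrite /leSpR /phiR1.
case h2b: (o2 \in proj1_sig b).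
  by rewrite (subsetP hab _ h2b).
case hjb: (jj \in proj1_sig b); last by case: ifP => //; case: ifP.
have hja := subsetP hab _ hjb.
rewrite hja.
case h2a: (o2 \in proj1_sig a) => //.
exfalso; apply: ha; apply: top_eq => i; case: (I3_cases i) => ->.
- exact: (subsetP hab _ hjb).
- exact: (proj2_sig a).
- exact: h2a.
Qed.

Lemma phiR1_W (a b : Lvert kk) : a <> Ltop kk -> b <> Ltop kk -> Rle a b ->
  setmin (proj1_sig a) = setmin (proj1_sig b) -> WA W (ESpR w f (phiR1 a) (phiR1 b)).
Proof.
move=> ha hb hab hm.
case Ea: (phiR1 a); case Eb: (phiR1 b); rewrite /= ?WA_mk; try exact: HW; try exact: Ww.
have hja : jj \in proj1_sig a.
  by move: Ea; rewrite /phiR1; case: ifP => // _; case: ifP.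
have hjb : jj \notin proj1_sig b.
  by move: Eb; rewrite /phiR1; case: ifP => // _; case: ifP.
have ejj : jj = ord0 by apply: val_inj.
rewrite ejj in hja hjb.
exfalso; move/negP: hjb; apply; apply: (setmin_0P (proj2_sig b)).
by rewrite -hm; apply: setmin_0.
Qed.

Definition fR1 := fPmR HW (@ESpR_src C X X' Y w f) (@ESpR_tgt C X X' Y w f) (@ESpR_id C X X' Y w f)
  (@ESpR_comp C X X' Y w f) phiR1_mono phiR1_W.

Lemma spanR_1 : exists Y' (f' : Hom Y' X') (w' : Hom Y' Y),
  [/\ W _ _ w', ccomp w f' = ccomp f w' & True].
Proof.
have [g hg] := Hrlp fR1.
pose v1 := @vset 2 kk [:: 1] isT.
pose v2k := @vset 2 kk [:: 2; 1] isT.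
pose vkj := @vset 2 kk [:: 1; 0] isT.
have h1 : lbR v2k v1 by apply: vsub.
have h2 : lbR vkj v1 by apply: vsub.
have t1 : lbR (Ltop kk) v1 by apply: vsub_top.
have t2k : lbR (Ltop kk) v2k by apply: vsub_top.
have tkj : lbR (Ltop kk) vkj by apply: vsub_top.
have n1 : v1 != Ltop kk by apply: (@vset_ntop 2 kk _ _ o2).
have n2k : v2k != Ltop kk by apply: (@vset_ntop 2 kk _ _ jj).
have nkj : vkj != Ltop kk by apply: (@vset_ntop 2 kk _ _ o2).
have T1 := g_tri (@lreflR 2 kk) g t2k h1 t1.
have T2 := g_tri (@lreflR 2 kk) g tkj h2 t1.
rewrite (g_edgeR hg h1 n2k n1) in T1.
rewrite (g_edgeR hg h2 nkj n1) in T2.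
have e1 : phiR1 v1 = S1 by rewrite /phiR1 !vset_mem.
have e2k : phiR1 v2k = S01 by rewrite /phiR1 !vset_mem.
have ekj : phiR1 vkj = S12 by rewrite /phiR1 !vset_mem.
rewrite e1 e2k /= in T1; rewrite e1 ekj /= in T2.
case/Acomp_inv2: T1 => c1 [p1 [eu1 eu0]].
case/Acomp_inv2: T2 => c2 [p2 [eu2 eu0']].
rewrite eu0 in eu0'.
have ec := mkArr_src eu0'; subst c2.
have ecomm := mkArr_inj eu0'.
have Wp2 : W _ _ p2.
  have := g_markR g tkj; rewrite eu2 WA_mk; apply.
  by rewrite !setmin_0 // ?vset_mem // inE.
exists c1, p1, p2; split => //.

Qed.
End SpanR_1.

Section SpanR_0.
Variables (C : category) (W : cmarking C).
Arguments W : clear implicits.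
Variable HW : forall x, W x x (cid x).
Hypothesis Hrlp : rlp (RJ_incl (@Ordinal 3 0 isT)) (marked_nerve HW).
Variables (X X' Y : Obj C) (w : Hom X' X) (f : Hom Y X).
Hypothesis Ww : W _ _ w.
Hypothesis Wf : W _ _ f.

Notation kk := (@Ordinal 3 0 isT).
Notation jj := (@Ordinal 3 1 isT).

Definition phiR0 (a : Lvert kk) : sp :=
  if o2 \in proj1_sig a then S01 else if jj \in proj1_sig a then S12 else S1.

Lemma phiR0_mono (a b : Lvert kk) : a <> Ltop kk -> b <> Ltop kk -> Rle a b -> leSpR (phiR0 a) (phiR0 b).
Proof.
move=> ha hb hab; rewrite /leSpR /phiR0.
case h2b: (o2 \in proj1_sig b).
  by rewrite (subsetP hab _ h2b).
case hjb: (jj \in proj1_sig b); last by case: ifP => //; case: ifP.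
have hja := subsetP hab _ hjb.
rewrite hja.
case h2a: (o2 \in proj1_sig a) => //.
exfalso; apply: ha; apply: top_eq => i; case: (I3_cases i) => ->.
- exact: (proj2_sig a).
- exact: (subsetP hab _ hjb).
- exact: h2a.
Qed.

Lemma phiR0_W (a b : Lvert kk) : a <> Ltop kk -> b <> Ltop kk -> Rle a b ->
  setmin (proj1_sig a) = setmin (proj1_sig b) -> WA W (ESpR w f (phiR0 a) (phiR0 b)).
Proof.
move=> ha hb hab hm.
case Ea: (phiR0 a); case Eb: (phiR0 b); rewrite /= ?WA_mk; try exact: HW; try exact: Ww.
exact: Wf.
Qed.

Definition fR0 := fPmR HW (@ESpR_src C X X' Y w f) (@ESpR_tgt C X X' Y w f) (@ESpR_id C X X' Y w f)
  (@ESpR_comp C X X' Y w f) phiR0_mono phiR0_W.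

Lemma spanR_0 : exists Y' (f' : Hom Y' X') (w' : Hom Y' Y),
  [/\ W _ _ w', ccomp w f' = ccomp f w' & W _ _ f'].
Proof.
have [g hg] := Hrlp fR0.
pose v1 := @vset 2 kk [:: 0] isT.
pose v2k := @vset 2 kk [:: 2; 0] isT.
pose vkj := @vset 2 kk [:: 0; 1] isT.
have h1 : lbR v2k v1 by apply: vsub.
have h2 : lbR vkj v1 by apply: vsub.
have t1 : lbR (Ltop kk) v1 by apply: vsub_top.
have t2k : lbR (Ltop kk) v2k by apply: vsub_top.
have tkj : lbR (Ltop kk) vkj by apply: vsub_top.
have n1 : v1 != Ltop kk by apply: (@vset_ntop 2 kk _ _ o2).
have n2k : v2k != Ltop kk by apply: (@vset_ntop 2 kk _ _ jj).
have nkj : vkj != Ltop kk by apply: (@vset_ntop 2 kk _ _ o2).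
have T1 := g_tri (@lreflR 2 kk) g t2k h1 t1.
have T2 := g_tri (@lreflR 2 kk) g tkj h2 t1.
rewrite (g_edgeR hg h1 n2k n1) in T1.
rewrite (g_edgeR hg h2 nkj n1) in T2.
have e1 : phiR0 v1 = S1 by rewrite /phiR0 !vset_mem.
have e2k : phiR0 v2k = S01 by rewrite /phiR0 !vset_mem.
have ekj : phiR0 vkj = S12 by rewrite /phiR0 !vset_mem.
rewrite e1 e2k /= in T1; rewrite e1 ekj /= in T2.
case/Acomp_inv2: T1 => c1 [p1 [eu1 eu0]].
case/Acomp_inv2: T2 => c2 [p2 [eu2 eu0']].
rewrite eu0 in eu0'.
have ec := mkArr_src eu0'; subst c2.
have ecomm := mkArr_inj eu0'.
have Wp2 : W _ _ p2.
  have := g_markR g tkj; rewrite eu2 WA_mk; apply.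
  by rewrite !setmin_0 // ?vset_mem // inE.
exists c1, p1, p2; split => //.
have := g_markR g t2k; rewrite eu1 WA_mk; apply.
by rewrite !setmin_0 // ?vset_mem // inE.
Qed.
End SpanR_0.


Definition leER (s s' : e5) : bool := leE s' s.

Section EqShapeR.
Variables (C : category) (X' X Y : Obj C) (w : Hom X X') (f g : Hom Y X).
Hypothesis hfg : ccomp w f = ccomp w g.
Definition EER (s s' : e5) : Arr C :=
  match s, s' with
  | A0, A0 => mkArr (cid X') | A1, A0 | A2, A0 | Cc, A0 => mkArr w | B5, A0 => mkArr (ccomp w f)
  | A1, A1 | Cc, A1 | A2, A2 | Cc, A2 | Cc, Cc => mkArr (cid X)
  | B5, A1 => mkArr f | B5, A2 => mkArr g | B5, B5 => mkArr (cid Y)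
  | _, _ => mkArr (cid X') end.
Lemma EER_src s s' : leER s s' -> src (EER s s') = ObE X' X Y s. Proof. by case: s; case: s'. Qed.
Lemma EER_tgt s s' : leER s s' -> tgt (EER s s') = ObE X' X Y s'. Proof. by case: s; case: s'. Qed.
Lemma EER_id s : EER s s = mkArr (cid (ObE X' X Y s)). Proof. by case: s. Qed.
Lemma EER_comp s s' s'' : leER s s' -> leER s' s'' -> Acomp (EER s s') (EER s' s'') (EER s s'').
Proof.
case: s; case: s'; case: s'' => //= _ _;
  first [apply: Acomp_idl | apply: Acomp_idr | apply: Acomp_mk | (rewrite hfg; apply: Acomp_mk)].
Qed.
End EqShapeR.

Section EqR.
Variables (C : category) (W : cmarking C).
Arguments W : clear implicits.
Variable HW : forall x, W x x (cid x).
Hypothesis Hrlp : rlp (RJ_incl q2) (marked_nerve HW).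
Variables (X' X Y : Obj C) (w : Hom X X') (f g : Hom Y X).
Hypothesis hfg : ccomp w f = ccomp w g.
Hypothesis Ww : W _ _ w.

Definition phiER (a : Lvert q2) : e5 :=
  if q0 \in proj1_sig a then B5
  else if (q3 \in proj1_sig a) && (q1 \in proj1_sig a) then Cc
  else if q3 \in proj1_sig a then A1
  else if q1 \in proj1_sig a then A2 else A0.

Lemma phiER_B a : isB (phiER a) = (q0 \in proj1_sig a).
Proof. by rewrite /phiER; case: ifP => //; case: ifP => //; case: ifP => //; case: ifP. Qed.

Lemma phiER_mono (a b : Lvert q2) : a <> Ltop q2 -> b <> Ltop q2 -> Rle a b -> leER (phiER a) (phiER b).
Proof.
move=> ha hb hab.
have H0 : q0 \in proj1_sig b -> q0 \in proj1_sig a by apply: (subsetP hab).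
have H1 : q1 \in proj1_sig b -> q1 \in proj1_sig a by apply: (subsetP hab).
have H3 : q3 \in proj1_sig b -> q3 \in proj1_sig a by apply: (subsetP hab).
have na : ~~ [&& q0 \in proj1_sig a, q1 \in proj1_sig a & q3 \in proj1_sig a].
  apply/negP => /and3P [a0 a1 a3]; apply: ha; apply: top_eq => i.
  by case: (I4_cases i) => [->|[->|[->|->]]] //; exact: (proj2_sig a).
move: H0 H1 H3 na; rewrite /leER /phiER.
case: (q0 \in proj1_sig a); case: (q1 \in proj1_sig a); case: (q3 \in proj1_sig a);
case: (q0 \in proj1_sig b); case: (q1 \in proj1_sig b); case: (q3 \in proj1_sig b) => //=;
by move=> H0 H1 H3; rewrite ?H0 ?H1 ?H3.
Qed.

Lemma phiER_W (a b : Lvert q2) : a <> Ltop q2 -> b <> Ltop q2 -> Rle a b ->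
  setmin (proj1_sig a) = setmin (proj1_sig b) -> WA W (EER w f g (phiER a) (phiER b)).
Proof.
move=> ha hb hab hm.
have key : phiER a = B5 -> phiER b = B5.
  move=> Ea; have h0a : q0 \in proj1_sig a by rewrite -phiER_B Ea.
  suff : isB (phiER b) by case: (phiER b).
  rewrite phiER_B.
  have e0 : q0 = ord0 by apply: val_inj.
  rewrite e0 in h0a *; apply: (setmin_0P (proj2_sig b)).
  by rewrite -hm; apply: setmin_0.
case Ea: (phiER a); case Eb: (phiER b); rewrite /= ?WA_mk; try exact: HW; try exact: Ww;
  by have := key Ea; rewrite Eb.
Qed.

Definition fER := fPmR HW (@EER_src C X' X Y w f g) (@EER_tgt C X' X Y w f g) (@EER_id C X' X Y w f g)
  (EER_comp hfg) phiER_mono phiER_W.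

Lemma eq_R : exists Y' (v : Hom Y' Y), W _ _ v /\ ccomp f v = ccomp g v.
Proof.
have [G hG] := Hrlp fER.
pose v02 := @vset 3 q2 [:: 0; 2] isT.
pose v023 := @vset 3 q2 [:: 0; 2; 3] isT.
pose v012 := @vset 3 q2 [:: 0; 1; 2] isT.
pose v23 := @vset 3 q2 [:: 2; 3] isT.
pose v12 := @vset 3 q2 [:: 1; 2] isT.
pose v123 := @vset 3 q2 [:: 1; 2; 3] isT.
have n02 : v02 != Ltop q2 by apply: (@vset_ntop 3 q2 _ _ q3).
have n023 : v023 != Ltop q2 by apply: (@vset_ntop 3 q2 _ _ q1).
have n012 : v012 != Ltop q2 by apply: (@vset_ntop 3 q2 _ _ q3).
have n23 : v23 != Ltop q2 by apply: (@vset_ntop 3 q2 _ _ q1).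
have n12 : v12 != Ltop q2 by apply: (@vset_ntop 3 q2 _ _ q3).
have n123 : v123 != Ltop q2 by apply: (@vset_ntop 3 q2 _ _ q0).
have p02 : phiER v02 = B5 by rewrite /phiER !vset_mem.
have p023 : phiER v023 = B5 by rewrite /phiER !vset_mem.
have p012 : phiER v012 = B5 by rewrite /phiER !vset_mem.
have p23 : phiER v23 = A1 by rewrite /phiER !vset_mem.
have p12 : phiER v12 = A2 by rewrite /phiER !vset_mem.
have p123 : phiER v123 = Cc by rewrite /phiER !vset_mem.
have s1 : lbR v023 v02 by apply: vsub.
have s2 : lbR v012 v02 by apply: vsub.
have s3 : lbR v023 v23 by apply: vsub.
have s4 : lbR v012 v12 by apply: vsub.
have s5 : lbR v123 v23 by apply: vsub.
have s6 : lbR v123 v12 by apply: vsub.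
have t02 : lbR (Ltop q2) v02 by apply: vsub_top.
have t023 : lbR (Ltop q2) v023 by apply: vsub_top.
have t012 : lbR (Ltop q2) v012 by apply: vsub_top.
have t23 : lbR (Ltop q2) v23 by apply: vsub_top.
have t12 : lbR (Ltop q2) v12 by apply: vsub_top.
have t123 : lbR (Ltop q2) v123 by apply: vsub_top.
have T1 := g_tri (@lreflR 3 q2) G t023 s1 t02.
have T2 := g_tri (@lreflR 3 q2) G t012 s2 t02.
have T3 := g_tri (@lreflR 3 q2) G t023 s3 t23.
have T4 := g_tri (@lreflR 3 q2) G t012 s4 t12.
have T5 := g_tri (@lreflR 3 q2) G t123 s5 t23.
have T6 := g_tri (@lreflR 3 q2) G t123 s6 t12.
rewrite (g_edgeR hG s1 n023 n02) p023 p02 /= in T1.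
rewrite (g_edgeR hG s2 n012 n02) p012 p02 /= in T2.
rewrite (g_edgeR hG s3 n023 n23) p023 p23 /= in T3.
rewrite (g_edgeR hG s4 n012 n12) p012 p12 /= in T4.
rewrite (g_edgeR hG s5 n123 n23) p123 p23 /= in T5.
rewrite (g_edgeR hG s6 n123 n12) p123 p12 /= in T6.
case/Acomp_inv2: T1 => c [h [e023 e02]]; rewrite ccomp_id_l in e02.
case/Acomp_inv2: T2 => c2 [h2 [e012 e02']]; rewrite ccomp_id_l e02 in e02'.
have ec := mkArr_src e02'; subst c2.
have eh := mkArr_inj e02'; subst h2.
rewrite e023 in T3; have e23 := Acomp_fun T3.
rewrite e012 in T4; have e12 := Acomp_fun T4.
case/Acomp_inv2: T5 => c3 [q [e123 e23']]; rewrite ccomp_id_l e23 in e23'.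
rewrite e123 in T6; have e12' := Acomp_fun T6.
rewrite ccomp_id_l e12 in e12'.
have ec3 := mkArr_src e23'; subst c3.
have E1 := mkArr_inj e23'; have E2 := mkArr_inj e12'.
exists c, h; split; last by rewrite E1 E2.
have := g_markR G t02; rewrite e02 WA_mk; apply.
by rewrite !setmin_0 // ?vset_mem // inE.
Qed.

End EqR.


Theorem part2 (C : category) (W : cmarking C) (HW : forall x : Obj C, W x x (cid x)) :
  proper_right W <-> CRF (marked_nerve HW).
Proof.
split.
  move=> HPR; split.
    apply: wc_of_comp => x y z g f wf wg.
    exact: (@Wcomp _ _ HPR z y x f g wg wf).
  move=> n k _ klt; exact: R_lift.
case=> wc R; split.
- move=> x y z g f wf wg.
  exact: (comp_of_wc wc wg wf).
- exact: HW.
- move=> X Y X' f w Ww.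
  case: (classic (W _ _ f)) => Wf.
    have [Y' [f' [w' [H1 H2 H3]]]] := spanR_0 (R 2 (@Ordinal 3 0 isT) isT isT) Ww Wf.
    by exists Y', f', w'; split.
  have [Y' [f' [w' [H1 H2 _]]]] := spanR_1 (R 2 (@Ordinal 3 1 isT) isT isT) f Ww.
  by exists Y', f', w'; split => // /Wf.
- move=> X Y f g [X' [w [Ww e]]].
  exact: (eq_R (R 3 q2 isT isT) e Ww).
Qed.

Theorem theorem5p2 (C : category) (W : cmarking C)
  (HW : forall x : Obj C, W x x (cid x)) :
  (proper_left W <-> CLF (marked_nerve HW)) /\
  (proper_right W <-> CRF (marked_nerve HW)).
Proof. split; [exact: part1 | exact: part2]. Qed.
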